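(* Suppose $\sigma_x=\sigma_y$ and $\rho\in(0,1)$. Then $(\mathbf a^*,\mathbf b^* )$ is a global pure equilibrium: $K(\mathbf a^*,\mathbf b)\le K(\mathbf a^*,\mathbf b^* )=0\le K(\mathbf a,\mathbf b^* )$ for all $\mathbf a,\mathbf b\in\mathbb R^2$.
   Context: Standing setup. Fix $\sigma_x,\sigma_y>0$ and $\rho\in(-1,1)$, and let $(\xi,\eta)$ be a bivariate normal random vector with mean $(0,0)$ and covariance matrix $\Sigma=\begin{pmatrix}\sigma_x^2&\rho\sigma_x\sigma_y\\ \rho\sigma_x\sigma_y&\sigma_y^2\end{pmatrix}$. Player I (the minimizer) chooses $\mathbf a=(x_1,y_1)\in\mathbb R^2$ and Player II (the maximizer) chooses $\mathbf b=(x_2,y_2)\in\mathbb R^2$. Let $C_1(\mathbf a,\mathbf b)=\{(x,y):(x_1-x)^2+(y_1-y)^2<(x_2-x)^2+(y_2-y)^2\}$ and $C_2(\mathbf a,\mathbf b)=\{(x,y):(x_1-x)^2+(y_1-y)^2>(x_2-x)^2+(y_2-y)^2\}$. The payoff to Player II (paid by Player I) is $K(\mathbf a,\mathbf b)=x_1+y_1$ if $\mathbf a=\mathbf b$, and $K(\mathbf a,\mathbf b)=(x_1+y_1)\,P((\xi,\eta)\in C_1(\mathbf a,\mathbf b))+(x_2+y_2)\,P((\xi,\eta)\in C_2(\mathbf a,\mathbf b))$ if $\mathbf a\neq\mathbf b$. For $\mathbf a=(x,y)$ write $-\mathbf a=(-x,-y)$. Let $x_2^*=\frac{\sqrt{2\pi(\sigma_x^2+2\rho\sigma_x\sigma_y+\sigma_y^2)}}{4}$,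 $\mathbf b^*=(x_2^*,x_2^* )$ and $\mathbf a^*=(-x_2^*,-x_2^* )$. *)

(* Defs.v *)
From Stdlib Require Import Reals Lra ClassicalEpsilon.
Open Scope R_scope.

(* Total Riemann integral on [a,b]: RiemannInt if f is Riemann integrable
   there (value is independent of the integrability proof), 0 otherwise. *)
Definition RInt (f : R -> R) (a b : R) : R :=
  match excluded_middle_informative (exists pr : Riemann_integrable f a b, True) with
  | left H => RiemannInt (proj1_sig (constructive_indefinite_description _ H))
  | right _ => 0
  end.

(* Total limit of a real sequence (0 if it does not converge). *)
Definition seq_lim (u : nat -> R) : R :=
  match excluded_middle_informative (exists l, Un_cv u l) with
  | left H => proj1_sig (constructive_indefinite_description _ H)
  | right _ => 0
  end.

Definition ind (P : Prop) : R :=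
  if excluded_middle_informative P then 1 else 0.

(* Density of the centered bivariate normal with covariance
   [[sx^2, rho sx sy],[rho sx sy, sy^2]], |rho|<1, sx,sy>0. *)
Definition bvn_density (sx sy rho : R) (x y : R) : R :=
  / (2 * PI * sx * sy * sqrt (1 - rho ^ 2)) *
  exp (- / (2 * (1 - rho ^ 2)) *
       (x ^ 2 / sx ^ 2 - 2 * rho * x * y / (sx * sy) + y ^ 2 / sy ^ 2)).

(* P((xi,eta) in C) = integral of the density over C, as the limit of the
   iterated Riemann integrals over the squares [-n,n]^2. *)
Definition bvn_prob (sx sy rho : R) (C : R -> R -> Prop) : R :=
  seq_lim (fun n : nat =>
    RInt (fun x => RInt (fun y => bvn_density sx sy rho x y * ind (C x y))
                        (- INR n) (INR n))
         (- INR n) (INR n)).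

Definition C1 (a b : R * R) (x y : R) : Prop :=
  (fst a - x) ^ 2 + (snd a - y) ^ 2 < (fst b - x) ^ 2 + (snd b - y) ^ 2.
Definition C2 (a b : R * R) (x y : R) : Prop :=
  (fst a - x) ^ 2 + (snd a - y) ^ 2 > (fst b - x) ^ 2 + (snd b - y) ^ 2.

(* Payoff to Player II. *)
Definition K (sx sy rho : R) (a b : R * R) : R :=
  if excluded_middle_informative (a = b) then fst a + snd a
  else (fst a + snd a) * bvn_prob sx sy rho (C1 a b)
       + (fst b + snd b) * bvn_prob sx sy rho (C2 a b).

Definition x2star (sx sy rho : R) : R :=
  sqrt (2 * PI * (sx ^ 2 + 2 * rho * sx * sy + sy ^ 2)) / 4.
Definition bstar (sx sy rho : R) : R * R := (x2star sx sy rho, x2star sx sy rho).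
Definition astar (sx sy rho : R) : R * R := (- x2star sx sy rho, - x2star sx sy rho).

(* Main.v *)
Require Import Defs.
From Stdlib Require Import Reals Lra Lia ZArith Psatz ClassicalEpsilon Classical PropExtensionality FunctionalExtensionality.
From Coquelicot Require Import Coquelicot.
Open Scope R_scope.


Ltac Rfix := match goal with |- @eq _ ?a ?b => change (@eq R a b) end.

Definition gexp (t : R) : R := exp (- (t * t) / 2).
Definition J (x : R) : R := RInt gexp 0 x.
Definition hh (x t : R) : R := exp (- (x * x) * (1 + t * t) / 2) / (1 + t * t).

Lemma cont_of_derive (f : R -> R) x : ex_derive f x -> continuous f x.
Proof. exact (@ex_derive_continuous R_AbsRing R_NormedModule f x). Qed.

Lemma cpt_of_derive (f : R -> R) x : ex_derive f x -> continuity_pt f x.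
Proof. intro H. apply continuity_pt_filterlim. apply cont_of_derive; auto. Qed.

Lemma exRInt_cont (f : R -> R) a b :
  (forall z, Rmin a b <= z <= Rmax a b -> continuous f z) -> ex_RInt f a b.
Proof. exact (@ex_RInt_continuous R_CompleteNormedModule f a b). Qed.

Lemma RInt_correctR (f : R -> R) a b : ex_RInt f a b -> is_RInt f a b (RInt f a b).
Proof. exact (@RInt_correct R_CompleteNormedModule f a b). Qed.

Lemma gexp_cont t : continuous gexp t.
Proof.
  unfold gexp. apply cont_of_derive; auto_derive; auto.
Qed.

Lemma ex_RInt_gexp a b : ex_RInt gexp a b.
Proof. apply exRInt_cont; intros; apply gexp_cont. Qed.

Lemma J_deriv x : is_derive J x (gexp x).
Proof.
  apply is_derive_RInt with (a := 0).
  - apply filter_forall; intros; apply RInt_correctR, ex_RInt_gexp.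
  - apply gexp_cont.
Qed.

Lemma hh_deriv x t : is_derive (fun z => hh z t) x (- x * exp (- (x * x) * (1 + t * t) / 2)).
Proof.
  unfold hh. auto_derive.
  - nra.
  - unfold Rdiv. field. nra.
Qed.

Lemma hh_cont2 x t : continuity_2d_pt (fun u v => - u * exp (- (u * u) * (1 + v * v) / 2)) x t.
Proof.
  apply continuity_2d_pt_mult.
  - apply continuity_2d_pt_opp, continuity_2d_pt_id1.
  - apply continuity_1d_2d_pt_comp with (f := exp).
    + apply derivable_continuous_pt, derivable_pt_exp.
    + apply continuity_2d_pt_mult; [|apply continuity_2d_pt_const].
      apply continuity_2d_pt_mult.
      * apply continuity_2d_pt_opp, continuity_2d_pt_mult; apply continuity_2d_pt_id1.
      * apply continuity_2d_pt_plus; [apply continuity_2d_pt_const|].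
        apply continuity_2d_pt_mult; apply continuity_2d_pt_id2.
Qed.

Lemma hh_cont t x : continuous (fun t0 => hh x t0) t.
Proof. apply cont_of_derive. unfold hh. auto_derive. nra. Qed.

Lemma ex_RInt_hh x a b : ex_RInt (hh x) a b.
Proof. apply exRInt_cont. intros; apply hh_cont. Qed.

Definition HI (x : R) : R := RInt (hh x) 0 1.

Lemma RInt_scalR (f : R -> R) a b l : ex_RInt f a b -> RInt (fun x => l * f x) a b = l * RInt f a b.
Proof. exact (@RInt_scal R_CompleteNormedModule f a b l). Qed.

Lemma RInt_comp_linR (f : R -> R) u v a b : ex_RInt f (u * a + v) (u * b + v) ->
  RInt (fun y => u * f (u * y + v)) a b = RInt f (u * a + v) (u * b + v).
Proof. exact (@RInt_comp_lin R_CompleteNormedModule f u v a b). Qed.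

Lemma RInt_extR (f g : R -> R) a b : (forall x, Rmin a b < x < Rmax a b -> f x = g x) ->
  RInt f a b = RInt g a b.
Proof. exact (@RInt_ext R_CompleteNormedModule f g a b). Qed.

Lemma HI_aux x t : - x * exp (- (x * x) * (1 + t * t) / 2) = - gexp x * (x * gexp (x * t + 0)).
Proof. unfold gexp. replace (- (x * x) * (1 + t * t) / 2) with (- (x * x) / 2 + - ((x * t + 0) * (x * t + 0)) / 2) by field.
  rewrite exp_plus. ring. Qed.

Lemma HI_deriv x : is_derive HI x (- gexp x * J x).
Proof.
  unfold HI.
  assert (H := is_derive_RInt_param (fun x t => hh x t) 0 1 x).
  assert (E : forall u t, Derive (fun z => hh z t) u = - u * exp (- (u * u) * (1 + t * t) / 2)).
  { intros; apply is_derive_unique, hh_deriv. }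
  simpl in H.
  replace (- gexp x * J x) with (RInt (fun t => Derive (fun u => hh u t) x) 0 1).
  - apply H.
    + apply filter_forall; intros; eexists; apply hh_deriv.
    + intros t _. eapply continuity_2d_pt_ext; [|apply (hh_cont2 x t)].
      intros; simpl; rewrite E; auto.
    + apply filter_forall; intros; apply ex_RInt_hh.
  - rewrite (RInt_extR _ (fun t => (- gexp x) * (x * gexp (x * t + 0)))).
    + rewrite RInt_scalR.
      * rewrite RInt_comp_linR. rewrite Rmult_0_r, Rplus_0_r, Rmult_1_r, Rplus_0_r.
        unfold J. reflexivity.
        rewrite Rmult_0_r, Rplus_0_r, Rmult_1_r, Rplus_0_r. apply ex_RInt_gexp.
      * apply exRInt_cont; intros; apply cont_of_derive. unfold gexp; auto_derive; auto.
    + intros t _. rewrite E. apply HI_aux.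
Qed.

Definition FF (x : R) : R := J x * J x + 2 * HI x.

Lemma FF_deriv x : is_derive FF x 0.
Proof.
  unfold FF.
  apply is_derive_ext with (f := fun x => J x * J x + 2 * HI x); [auto|].
  assert (H1 := J_deriv x). assert (H2 := HI_deriv x).
  replace 0 with (gexp x * J x + J x * gexp x + 2 * (- gexp x * J x)) by ring.
  apply (@is_derive_plus R_AbsRing R_NormedModule).
  - apply (is_derive_mult (K := R_AbsRing)); auto. intros; apply Rmult_comm.
  - apply is_derive_scal; auto.
Qed.

Lemma HI0 : HI 0 = PI / 4.
Proof.
  unfold HI. rewrite (RInt_extR _ (fun t => / (1 + t * t))).
  - apply (@is_RInt_unique R_CompleteNormedModule).
    replace (PI / 4) with (atan 1 - atan 0) by (rewrite atan_1, atan_0; ring).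
    apply (@is_RInt_derive R_CompleteNormedModule atan).
    + intros. replace (/ (1 + x * x)) with (/ (1 + x²)) by (unfold Rsqr; auto). apply is_derive_atan.
    + intros. apply cont_of_derive. auto_derive. nra.
  - intros. unfold hh. replace (- (0 * 0) * (1 + x * x) / 2) with 0 by field. rewrite exp_0. field. nra.
Qed.

Lemma FF_const x : FF x = PI / 2.
Proof.
  assert (FF 0 = PI / 2).
  { unfold FF. rewrite HI0. unfold J. rewrite RInt_point. unfold zero; simpl. field. }
  destruct (MVT_gen FF 0 x (fun _ => 0)) as [c [_ Hc]].
  - intros; apply FF_deriv.
  - intros. apply cpt_of_derive. eexists; apply FF_deriv.
  - lra.
Qed.

Lemma HI_bounds x : 0 <= HI x <= exp (- (x * x) / 2).
Proof.
  unfold HI. split.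
  - apply RInt_ge_0; [lra| apply ex_RInt_hh|]. intros. unfold hh.
    apply Rmult_le_pos; [left; apply exp_pos| left; apply Rinv_0_lt_compat; nra].
  - replace (exp (- (x * x) / 2)) with (RInt (fun _ => exp (- (x * x) / 2)) 0 1).
    + apply RInt_le; [lra| apply ex_RInt_hh| apply exRInt_cont; intros; apply continuous_const|].
      intros t Ht. unfold hh.
      assert (exp (- (x * x) * (1 + t * t) / 2) <= exp (- (x * x) / 2)).
      { destruct (Req_dec (- (x * x) * (1 + t * t) / 2) (- (x * x) / 2)) as [E|E]; [rewrite E; lra|].
        left; apply exp_increasing. nra. }
      assert (0 < exp (- (x * x) * (1 + t * t) / 2)) by apply exp_pos.
      apply Rle_trans with (exp (- (x * x) * (1 + t * t) / 2)); auto.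
      unfold Rdiv. rewrite <- (Rmult_1_r (exp _)) at 2. apply Rmult_le_compat_l; [lra|].
      rewrite <- Rinv_1. apply Rinv_le_contravar; nra.
    + rewrite RInt_const. unfold scal; simpl; unfold mult; simpl. ring.
Qed.

Lemma J_sq x : J x * J x = PI / 2 - 2 * HI x.
Proof. assert (H := FF_const x). unfold FF in H. lra. Qed.

Lemma PI_gt3 : 3 < PI.
Proof. generalize PI2_3_2; lra. Qed.

Definition sq2pi : R := sqrt (2 * PI).
Lemma sq2pi_pos : 0 < sq2pi.
Proof. unfold sq2pi. apply sqrt_lt_R0. assert (H := PI_RGT_0). lra. Qed.
Lemma sq2pi_sq : sq2pi * sq2pi = 2 * PI.
Proof. unfold sq2pi. apply sqrt_sqrt. assert (H := PI_RGT_0). lra. Qed.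

Definition phi (t : R) : R := gexp t / sq2pi.
Definition Phi0 (z : R) : R := J z / sq2pi.
Definition Q (z : R) : R := / 2 - Phi0 z.

Lemma gexp_pos t : 0 < gexp t. Proof. apply exp_pos. Qed.
Lemma phi_pos t : 0 < phi t.
Proof. unfold phi. apply Rdiv_lt_0_compat; [apply gexp_pos|apply sq2pi_pos]. Qed.
Lemma gexp_even t : gexp (- t) = gexp t.
Proof. unfold gexp. replace (- t * - t) with (t * t) by ring. reflexivity. Qed.
Lemma phi_even t : phi (- t) = phi t.
Proof. unfold phi. rewrite gexp_even. auto. Qed.
Lemma phi_cont t : continuous phi t.
Proof. apply cont_of_derive. unfold phi, gexp. auto_derive. auto. Qed.
Lemma phi_deriv t : is_derive phi t (- t * phi t).
Proof. unfold phi, gexp. auto_derive. generalize sq2pi_pos; intro. auto. unfold Rdiv. field. generalize sq2pi_pos; intro; lra. Qed.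
Lemma phi0 : phi 0 = / sq2pi.
Proof. unfold phi, gexp. replace (- (0 * 0) / 2) with 0 by field. rewrite exp_0. unfold Rdiv. ring. Qed.
Lemma ex_RInt_phi a b : ex_RInt phi a b.
Proof. apply exRInt_cont; intros; apply phi_cont. Qed.

Lemma RInt_ChaslesR (f : R -> R) a b c : ex_RInt f a b -> ex_RInt f b c -> RInt f a b + RInt f b c = RInt f a c.
Proof. exact (@RInt_Chasles R_CompleteNormedModule f a b c). Qed.

Lemma RInt_gexp a b : RInt gexp a b = J b - J a.
Proof.
  unfold J. rewrite <- (RInt_ChaslesR gexp a 0 b); try apply ex_RInt_gexp.
  rewrite <- (@opp_RInt_swap R_CompleteNormedModule); [|apply ex_RInt_gexp]. unfold opp; simpl. ring.
Qed.

Lemma RInt_phi a b : RInt phi a b = Phi0 b - Phi0 a.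
Proof.
  unfold phi, Phi0. rewrite (RInt_extR _ (fun x => / sq2pi * gexp x)).
  - rewrite RInt_scalR by apply ex_RInt_gexp. rewrite RInt_gexp. Rfix. unfold Rdiv. ring.
  - intros; unfold Rdiv; ring.
Qed.

Lemma Phi0_deriv z : is_derive Phi0 z (phi z).
Proof.
  unfold Phi0, phi. apply is_derive_ext with (f := fun z => / sq2pi * J z); [intros; Rfix; unfold Rdiv; ring|].
  replace (gexp z / sq2pi) with (/ sq2pi * gexp z) by (unfold Rdiv; ring).
  apply is_derive_scal, J_deriv.
Qed.

Lemma Q_deriv z : is_derive Q z (- phi z).
Proof.
  unfold Q. apply is_derive_ext with (f := fun z => / 2 + -1 * Phi0 z); [intros; Rfix; ring|].
  replace (- phi z) with (0 + -1 * phi z) by ring.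
  apply (@is_derive_plus R_AbsRing R_NormedModule).
  - apply (@is_derive_const R_AbsRing R_NormedModule).
  - apply is_derive_scal, Phi0_deriv.
Qed.

Lemma J_odd x : J (- x) = - J x.
Proof.
  unfold J.
  assert (H := RInt_comp_linR gexp (-1) 0 0 x (ex_RInt_gexp _ _)).
  replace (-1 * 0 + 0) with 0 in H by ring. replace (-1 * x + 0) with (- x) in H by ring.
  rewrite <- H. rewrite (RInt_extR _ (fun y => -1 * gexp y)).
  - rewrite RInt_scalR; [ring| apply ex_RInt_gexp].
  - intros y _. replace (-1 * y + 0) with (- y) by ring. rewrite gexp_even. reflexivity.
Qed.

Lemma Phi0_odd z : Phi0 (- z) = - Phi0 z.
Proof. unfold Phi0. rewrite J_odd. unfold Rdiv. ring. Qed.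

Lemma Q_neg z : Q (- z) = 1 - Q z.
Proof. unfold Q. rewrite Phi0_odd. field. Qed.

Lemma Q0 : Q 0 = / 2.
Proof. unfold Q, Phi0, J. rewrite RInt_point. unfold zero; simpl. unfold Rdiv. ring. Qed.

Lemma Phi0_incr a b : a <= b -> Phi0 a <= Phi0 b.
Proof.
  intros Hab. assert (0 <= RInt phi a b).
  { apply RInt_ge_0; auto. apply ex_RInt_phi. intros; left; apply phi_pos. }
  rewrite RInt_phi in H. lra.
Qed.

Lemma Q_decr a b : a <= b -> Q b <= Q a.
Proof. intros; unfold Q. generalize (Phi0_incr a b H). lra. Qed.

Lemma J_nonneg x : 0 <= x -> 0 <= J x.
Proof. intros. unfold J. apply RInt_ge_0; auto. apply ex_RInt_gexp. intros; left; apply gexp_pos. Qed.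

Lemma Q_bound_pos z : 0 <= z -> 0 <= Q z <= 2 / PI * exp (- (z * z) / 2).
Proof.
  intros Hz.
  assert (HJ := J_sq z). assert (HB := HI_bounds z). assert (J0 := J_nonneg z Hz).
  assert (Hpi := PI_RGT_0).
  set (s := sqrt (PI / 2)).
  assert (Hs : s * s = PI / 2) by (apply sqrt_sqrt; lra).
  assert (Hs0 : 0 < s) by (apply sqrt_lt_R0; lra).
  assert (Hq : sq2pi = 2 * s).
  { unfold sq2pi, s. replace (2 * PI) with (4 * (PI / 2)) by field. rewrite sqrt_mult; try lra.
    replace 4 with (2 * 2) by ring. rewrite sqrt_square; lra. }
  assert (HQ : Q z = (s - J z) / (2 * s)).
  { unfold Q, Phi0. rewrite Hq. field. lra. }
  rewrite HQ.
  assert (J z <= s) by nra.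
  assert (E : (s - J z) * (s + J z) <= 2 * exp (- (z * z) / 2)) by nra.
  split.
  - apply Rdiv_le_0_compat; lra.
  - assert (s - J z <= 2 * exp (- (z * z) / 2) / s).
    { apply Rmult_le_reg_r with s; auto. unfold Rdiv. rewrite Rmult_assoc, Rinv_l; nra. }
    apply Rle_trans with (2 * exp (- (z * z) / 2) / s / (2 * s)).
    + unfold Rdiv. apply Rmult_le_compat_r; [left; apply Rinv_0_lt_compat; lra| lra].
    + right. replace PI with (2 * (s * s)) by lra. field. lra.
Qed.

Lemma Q_nonneg z : 0 <= Q z.
Proof.
  destruct (Rle_dec 0 z). apply Q_bound_pos; auto.
  rewrite <- (Ropp_involutive z), Q_neg. assert (H := Q_bound_pos (- z)).
  assert (2 / PI * exp (- (- z * - z) / 2) <= 1).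
  { generalize PI_RGT_0, PI_gt3; intros.
    assert (exp (- (- z * - z) / 2) <= 1).
    { rewrite <- exp_0. destruct (Req_dec (- (- z * - z) / 2) 0) as [E|E]; [rewrite E; lra|left; apply exp_increasing; nra]. }
    assert (2 / PI <= 1). { apply Rmult_le_reg_r with PI; auto. unfold Rdiv; rewrite Rmult_assoc, Rinv_l; lra. }
    assert (0 <= 2 / PI) by (unfold Rdiv; apply Rmult_le_pos; [lra|left; apply Rinv_0_lt_compat; lra]).
    nra. }
  destruct H; lra.
Qed.

Lemma Q_le1 z : Q z <= 1.
Proof. rewrite <- (Ropp_involutive z), Q_neg. generalize (Q_nonneg (- z)). lra. Qed.

Lemma Q_tail z : 0 < z -> Q z <= / z.
Proof.
  intros Hz. destruct (Q_bound_pos z) as [_ H]; [lra|].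
  assert (E : 1 + z * z / 2 <= exp (z * z / 2)) by apply exp_ineq1_le.
  assert (E2 : exp (- (z * z) / 2) * exp (z * z / 2) = 1).
  { rewrite <- exp_plus. replace (- (z * z) / 2 + z * z / 2) with 0 by field. apply exp_0. }
  assert (Hpi := PI_gt3).
  assert (0 < exp (- (z * z) / 2)) by apply exp_pos.
  assert (exp (- (z * z) / 2) * (1 + z * z / 2) <= 1) by nra.
  apply Rle_trans with (2 / PI * exp (- (z * z) / 2)); auto.
  apply Rmult_le_reg_r with (PI * z); [nra|].
  replace (2 / PI * exp (- (z * z) / 2) * (PI * z)) with (2 * z * exp (- (z * z) / 2)) by (field; lra).
  replace (/ z * (PI * z)) with PI by (field; lra).
  nra.
Qed.

Definition kk : R := sq2pi / 2.
Lemma kk_gt1 : 1 < kk.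
Proof.
  unfold kk. assert (2 < sq2pi).
  { assert (H := sq2pi_sq). assert (H0 := sq2pi_pos). assert (H1 := PI_gt3). nra. }
  lra.
Qed.

Definition gg (y : R) : R := (y + kk) * phi y - Q y.

Lemma gg_deriv y : is_derive gg y (phi y * (2 - y * y - kk * y)).
Proof.
  unfold gg.
  apply (is_derive_ext (fun y => (y + kk) * phi y + (-1) * Q y)); [intros; Rfix; ring|].
  replace (phi y * (2 - y * y - kk * y)) with ((1 * phi y + (y + kk) * (- y * phi y)) + (-1) * (- phi y)) by ring.
  apply (@is_derive_plus R_AbsRing R_NormedModule).
  - apply (is_derive_mult (K := R_AbsRing) (fun y => y + kk) phi); [| apply phi_deriv | intros; apply Rmult_comm].
    apply (is_derive_ext (fun y => y + kk)); [auto|]. auto_derive; auto; ring.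
  - apply is_derive_scal, Q_deriv.
Qed.

Lemma gg_cpt y : continuity_pt gg y.
Proof. apply cpt_of_derive. eexists; apply gg_deriv. Qed.

Lemma gg0 : gg 0 = 0.
Proof. unfold gg. rewrite phi0, Q0. unfold kk. field. generalize sq2pi_pos; lra. Qed.

Lemma MVT_R (f : R -> R) df a b : a <= b ->
  (forall x, is_derive f x (df x)) -> exists c, a <= c <= b /\ f b - f a = df c * (b - a).
Proof.
  intros Hab Hd. destruct (MVT_gen f a b df) as [c [Hc E]].
  - intros; apply Hd.
  - intros; apply cpt_of_derive; eexists; apply Hd.
  - exists c. rewrite Rmin_left, Rmax_right in Hc; auto.
Qed.

Lemma gg_ge1 y : 1 <= y -> 0 <= gg y.
Proof.
  intros Hy. destruct (Rle_dec 0 (gg y)) as [|Hn]; auto. exfalso.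
  apply Rnot_le_lt in Hn.
  set (Y := Rmax y (2 / (- gg y))).
  assert (HY1 : y <= Y) by apply Rmax_l.
  assert (HY2 : 2 / (- gg y) <= Y) by apply Rmax_r.
  assert (HYpos : 0 < Y) by lra.
  destruct (MVT_R gg (fun y => phi y * (2 - y * y - kk * y)) y Y HY1 gg_deriv) as [c [Hc E]].
  assert (phi c * (2 - c * c - kk * c) <= 0).
  { assert (H := phi_pos c). assert (H2 := kk_gt1). assert (2 - c * c - kk * c <= 0) by nra. nra. }
  assert (gg Y <= gg y) by nra.
  assert (gg Y >= - / Y).
  { unfold gg. assert (HQ := Q_tail Y HYpos). assert (H2 := phi_pos Y). assert (H3 := kk_gt1). nra. }
  assert (/ Y <= - gg y / 2).
  { apply Rmult_le_reg_r with Y; auto. rewrite Rinv_l; [|lra].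
    assert (2 <= Y * (- gg y)).
    { apply Rmult_le_reg_r with (/ (- gg y)). apply Rinv_0_lt_compat; lra.
      rewrite Rmult_assoc, Rinv_r; [|lra]. unfold Rdiv in HY2. lra. }
    nra. }
  lra.
Qed.

Lemma gg_nonneg y : 0 <= y -> 0 <= gg y.
Proof.
  intros Hy. destruct (Rle_dec 1 y) as [H1|H1]; [apply gg_ge1; auto|].
  assert (Hk := kk_gt1).
  destruct (Rle_dec (y * y + kk * y) 2) as [H2|H2].
  - destruct (MVT_R gg (fun y => phi y * (2 - y * y - kk * y)) 0 y Hy gg_deriv) as [c [Hc E]].
    rewrite gg0 in E. assert (H := phi_pos c).
    assert (c * c <= y * y) by nra. assert (kk * c <= kk * y) by nra.
    assert (0 <= 2 - c * c - kk * c) by lra.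
    assert (0 <= phi c * (2 - c * c - kk * c)) by (apply Rmult_le_pos; lra). nra.
  - destruct (MVT_R gg (fun y => phi y * (2 - y * y - kk * y)) y 1 ltac:(lra) gg_deriv) as [c [Hc E]].
    assert (H := phi_pos c). assert (H3 := gg_ge1 1 ltac:(lra)).
    assert (c * c >= y * y) by nra. assert (kk * c >= kk * y) by nra.
    assert (2 - c * c - kk * c <= 0) by nra.
    assert (phi c * (2 - c * c - kk * c) <= 0) by (apply Rmult_le_0_l; lra). nra.
Qed.

Lemma gg_nonpos y : - kk <= y <= 0 -> gg y <= 0.
Proof.
  intros Hy.
  destruct (MVT_R gg (fun y => phi y * (2 - y * y - kk * y)) y 0 ltac:(lra) gg_deriv) as [c [Hc E]].
  rewrite gg0 in E. assert (H := phi_pos c).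
  assert (0 <= (- c) * (c + kk)) by (apply Rmult_le_pos; lra).
  assert (0 <= phi c * (2 - c * c - kk * c)) by (apply Rmult_le_pos; lra).
  assert (0 <= phi c * (2 - c * c - kk * c) * (0 - y)) by (apply Rmult_le_pos; lra). lra.
Qed.

Definition ff (v : R) : R := v * Q (v - kk).

Lemma ff_deriv (v : R) : is_derive ff v (- gg (v - kk)).
Proof.
  unfold ff, gg.
  assert (E : - ((v - kk + kk) * phi (v - kk) - Q (v - kk)) = 1 * Q (v - kk) + v * (1 * - phi (v - kk))).
  { replace (v - kk + kk) with v by ring. ring. }
  rewrite E.
  apply (is_derive_mult (K := R_AbsRing) (fun v => v) (fun v => Q (v - kk))); [| | intros; apply Rmult_comm].
  - apply (@is_derive_id R_AbsRing).
  - apply (is_derive_comp Q (fun v => v - kk)); [apply Q_deriv|].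
    auto_derive; auto; Rfix; ring.
Qed.

Lemma ff_max v : ff v <= kk / 2.
Proof.
  assert (Hk := kk_gt1).
  assert (Hfk : ff kk = kk / 2) by (unfold ff; replace (kk - kk) with 0 by ring; rewrite Q0; field).
  destruct (Rle_dec 0 v) as [H0|H0].
  - destruct (Rle_dec kk v) as [H1|H1].
    + destruct (MVT_R ff (fun v => - gg (v - kk)) kk v H1 ff_deriv) as [c [Hc E]].
      assert (0 <= gg (c - kk)) by (apply gg_nonneg; lra). nra.
    + destruct (MVT_R ff (fun v => - gg (v - kk)) v kk ltac:(lra) ff_deriv) as [c [Hc E]].
      assert (gg (c - kk) <= 0) by (apply gg_nonpos; lra). nra.
  - unfold ff. assert (H := Q_nonneg (v - kk)). nra.
Qed.

Lemma zcmp_core (rho c u N D t : R) : 0 < rho < 1 -> 0 < c -> 0 < u -> u * u / 2 <= N ->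
  D * D = (1 - rho) * N + rho * (u * u) -> 0 <= D -> 0 < t -> t * t = (1 + rho) / 2 ->
  (u * u / 4 - c * u) * D <= (N / 2 - c * u) * (u * t).
Proof.
  intros Hr Hc Hu HN HD HD0 Ht Ht2.
  set (D0 := u * t). set (m0 := u * u / 4 - c * u). set (m := N / 2 - c * u).
  assert (HD0pos : 0 < D0) by (unfold D0; nra).
  assert (HD0sq : D0 * D0 = u * u * ((1 + rho) / 2)) by (unfold D0; rewrite <- Ht2; ring).
  assert (HS : D0 * D0 <= D * D) by nra.
  assert (HDD : D0 <= D) by nra.
  assert (Hmm : m0 <= m) by (unfold m, m0; lra).
  destruct (Rle_dec m0 0) as [H0|H0].
  - nra.
  - assert (Hsq : (m0 * D) * (m0 * D) <= (m * D0) * (m * D0)).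
    { set (Dl := N - u * u / 2).
      assert (Em : m = m0 + Dl / 2) by (unfold m, m0, Dl; lra).
      assert (ES : D * D = D0 * D0 + (1 - rho) * Dl) by (unfold Dl; rewrite HD, HD0sq; field).
      assert (Hpos : 0 < D0 * D0 - (1 - rho) * m0).
      { rewrite HD0sq. unfold m0. assert (0 < u * u) by nra. assert (0 < (1 - rho) * (c * u)) by (apply Rmult_lt_0_compat; nra).
        assert (0 < u * u * rho) by nra. lra. }
      assert (Dl0 : 0 <= Dl) by (unfold Dl; lra).
      assert (E : (m * D0) * (m * D0) - (m0 * D) * (m0 * D) =
                  Dl * (m0 * (D0 * D0 - (1 - rho) * m0) + Dl * (D0 * D0) / 4)).
      { assert (E2 : (m0 * D) * (m0 * D) = m0 * m0 * (D * D)) by ring.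
        rewrite E2, ES, Em. field. }
      assert (0 <= Dl * (m0 * (D0 * D0 - (1 - rho) * m0) + Dl * (D0 * D0) / 4)).
      { apply Rmult_le_pos; auto. assert (0 < m0 * (D0 * D0 - (1 - rho) * m0)) by (apply Rmult_lt_0_compat; lra).
        assert (0 <= Dl * (D0 * D0) / 4) by (unfold Rdiv; apply Rmult_le_pos; [apply Rmult_le_pos; nra|lra]). lra. }
      lra. }
    assert (0 <= m0 * D) by nra. assert (0 <= m * D0) by nra.
    nra.
Qed.

Lemma c_eq (sg rho : R) : 0 < sg -> 0 < rho < 1 ->
  x2star sg sg rho = kk * (sg * sqrt ((1 + rho) / 2)).
Proof.
  intros Hs Hr. unfold x2star, kk, sq2pi.
  assert (Hpi := PI_gt3).
  replace (2 * PI * (sg ^ 2 + 2 * rho * sg * sg + sg ^ 2)) with ((2 * PI) * ((2 * sg) * (2 * sg) * ((1 + rho) / 2))) by (simpl; field).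
  rewrite sqrt_mult; [| lra | apply Rmult_le_pos; [nra|lra]].
  rewrite (sqrt_mult ((2 * sg) * (2 * sg))); [| nra | lra].
  rewrite sqrt_square; [| lra]. field.
Qed.

Lemma keyL (sg rho w1 w2 : R) : 0 < sg -> 0 < rho < 1 -> (w1 <> 0 \/ w2 <> 0) ->
  (w1 + w2) * Q (((w1 * w1 + w2 * w2) / 2 - x2star sg sg rho * (w1 + w2)) /
                 (sg * sqrt (w1 * w1 + 2 * rho * w1 * w2 + w2 * w2))) <= 2 * x2star sg sg rho.
Proof.
  intros Hs Hr Hw.
  set (t := sqrt ((1 + rho) / 2)).
  assert (Ht : 0 < t) by (apply sqrt_lt_R0; lra).
  assert (Ht2 : t * t = (1 + rho) / 2) by (apply sqrt_sqrt; lra).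
  set (u := w1 + w2). set (N := w1 * w1 + w2 * w2). set (c := x2star sg sg rho).
  assert (Hc : c = kk * (sg * t)) by (apply c_eq; auto).
  assert (Hk := kk_gt1).
  assert (Hcpos : 0 < c) by (rewrite Hc; apply Rmult_lt_0_compat; [lra| nra]).
  destruct (Rle_dec u 0) as [Hu|Hu].
  - match goal with |- ?a * Q ?b <= _ => assert (0 <= (- a) * Q b) by (apply Rmult_le_pos; [lra| apply Q_nonneg]) end.
    lra.
  - apply Rnot_le_lt in Hu.
    set (S := w1 * w1 + 2 * rho * w1 * w2 + w2 * w2).
    assert (HS : S = (1 - rho) * N + rho * (u * u)) by (unfold S, N, u; ring).
    assert (HN : u * u / 2 <= N).
    { unfold u, N. assert (H0 := Rle_0_sqr (w1 - w2)). unfold Rsqr in H0. lra. }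
    assert (HS0 : 0 <= S) by (rewrite HS; nra).
    set (D := sqrt S).
    assert (HD : D * D = S) by (apply sqrt_sqrt; auto).
    assert (HD0 : 0 <= D) by apply sqrt_pos.
    assert (Hcore := zcmp_core rho c u N D t Hr Hcpos Hu HN ltac:(rewrite HD; auto) HD0 Ht Ht2).
    assert (HDpos : 0 < D).
    { destruct (Rle_lt_dec D 0); auto. assert (D = 0) by lra. assert (S = 0) by nra.
      assert (0 < N) by (unfold N; destruct Hw; nra). nra. }
    set (v := u / (4 * (sg * t))).
    assert (Hz : v - kk <= (N / 2 - c * u) / (sg * D)).
    { unfold v. rewrite Hc.
      apply Rmult_le_reg_r with (sg * D * (4 * (sg * t))); [ repeat apply Rmult_lt_0_compat; lra |].
      replace ((u / (4 * (sg * t)) - kk) * (sg * D * (4 * (sg * t)))) with (sg * ((u - 4 * kk * (sg * t)) * D)) by (field; repeat split; lra).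
      replace ((N / 2 - kk * (sg * t) * u) / (sg * D) * (sg * D * (4 * (sg * t)))) with (sg * (4 * ((N / 2 - kk * (sg * t) * u) * t))) by (field; repeat split; lra).
      apply Rmult_le_compat_l; [lra|]. rewrite Hc in Hcore.
      apply Rmult_le_reg_l with (u / 4); [lra|].
      replace (u / 4 * ((u - 4 * kk * (sg * t)) * D)) with ((u * u / 4 - kk * (sg * t) * u) * D) by field.
      replace (u / 4 * (4 * ((N / 2 - kk * (sg * t) * u) * t))) with ((N / 2 - kk * (sg * t) * u) * (u * t)) by field.
      exact Hcore. }
    assert (HQ := Q_decr _ _ Hz).
    assert (Hff := ff_max v). unfold ff in Hff.
    fold S. fold D. fold N. fold u.
    apply Rle_trans with (u * Q (v - kk)); [apply Rmult_le_compat_l; lra|].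
    replace (u * Q (v - kk)) with (4 * (sg * t) * (v * Q (v - kk))) by (unfold v; field; lra).
    rewrite Hc. assert (0 < 4 * (sg * t)) by nra. nra.
Qed.

Lemma phi_cpt t : continuity_pt phi t.
Proof. apply cpt_of_derive. eexists; apply phi_deriv. Qed.
Lemma Q_cont t : continuous Q t.
Proof. apply cont_of_derive. eexists; apply Q_deriv. Qed.
Lemma Phi0_cont t : continuous Phi0 t.
Proof. apply cont_of_derive. eexists; apply Phi0_deriv. Qed.
Lemma Q_cpt t : continuity_pt Q t.
Proof. apply cpt_of_derive. eexists; apply Q_deriv. Qed.
Lemma Phi0_cpt t : continuity_pt Phi0 t.
Proof. apply cpt_of_derive. eexists; apply Phi0_deriv. Qed.

Lemma Phi0_Q z : Phi0 z = / 2 - Q z.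
Proof. unfold Q. ring. Qed.

Lemma RInt_phi_lin (a b mu s : R) : 0 < s ->
  RInt (fun y => phi ((y - mu) / s) / s) a b = Phi0 ((b - mu) / s) - Phi0 ((a - mu) / s).
Proof.
  intros Hs.
  rewrite (RInt_extR _ (fun y => / s * phi (/ s * y + (- mu / s)))).
  - rewrite RInt_comp_linR by apply ex_RInt_phi. rewrite RInt_phi.
    replace (/ s * b + - mu / s) with ((b - mu) / s) by (field; lra).
    replace (/ s * a + - mu / s) with ((a - mu) / s) by (field; lra). reflexivity.
  - intros. replace (/ s * x + - mu / s) with ((x - mu) / s) by (field; lra). unfold Rdiv. ring.
Qed.

Lemma RInt_phi_sym_le1 S : RInt phi (- S) S <= 1.
Proof.
  rewrite RInt_phi, Phi0_odd, !Phi0_Q. generalize (Q_nonneg S). lra.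
Qed.

Lemma phi_prod (al r u s : R) : 0 < r -> r * r = 1 + al * al ->
  phi u * phi (al * u + s) = phi (r * u + al * s / r) * phi (s / r).
Proof.
  intros Hr Hr2. unfold phi, gexp.
  assert (E : - (u * u) / 2 + - ((al * u + s) * (al * u + s)) / 2 =
              - ((r * u + al * s / r) * (r * u + al * s / r)) / 2 + - (s / r * (s / r)) / 2).
  { assert (E1 : (r * u + al * s / r) * (r * u + al * s / r) = r * r * (u * u) + 2 * al * u * s + al * s / r * (al * s / r)) by (field; lra).
    assert (E2 : al * s / r * (al * s / r) + s / r * (s / r) = s * s).
    { replace (al * s / r * (al * s / r) + s / r * (s / r)) with (s * s * (1 + al * al) / (r * r)) by (field; lra).
      rewrite <- Hr2. field. lra. }
    rewrite E1, Hr2. lra. }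
  transitivity (exp (- (u * u) / 2 + - ((al * u + s) * (al * u + s)) / 2) / (sq2pi * sq2pi)).
  - rewrite exp_plus. field. generalize sq2pi_pos; lra.
  - rewrite E, exp_plus. field. generalize sq2pi_pos; lra.
Qed.

Lemma RInt_phi_aff (r c a b : R) : 0 < r ->
  RInt (fun t => phi (r * t + c)) a b = (Phi0 (r * b + c) - Phi0 (r * a + c)) / r.
Proof.
  intros Hr.
  rewrite (RInt_extR _ (fun t => / r * (r * phi (r * t + c)))).
  - rewrite RInt_scalR. rewrite RInt_comp_linR by apply ex_RInt_phi. rewrite RInt_phi. Rfix. unfold Rdiv; ring.
    apply exRInt_cont. intros. apply cont_of_derive. eexists.
    apply (is_derive_scal (fun t => phi (r * t + c))).
    apply (is_derive_comp phi (fun t => r * t + c)); [apply phi_deriv|]. auto_derive; auto.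
  - intros. field. lra.
Qed.

Definition hS (al S b : R) : R := RInt (fun u => phi u * Q (al * u + b)) (- S) S.

Definition Wf (al r S s : R) : R := Phi0 (r * S + al * s / r) - Phi0 (r * - S + al * s / r).

Lemma cont_prod_comp (u : R) al b : continuous (fun u => phi u * Q (al * u + b)) u.
Proof.
  apply cont_of_derive. eexists.
  apply (is_derive_mult (K := R_AbsRing) phi (fun u => Q (al * u + b))); [apply phi_deriv| |intros; apply Rmult_comm].
  apply (is_derive_comp Q (fun u => al * u + b)); [apply Q_deriv|]. auto_derive; auto.
Qed.

Lemma hS_deriv (al r S b0 : R) : 0 < r -> r * r = 1 + al * al ->
  is_derive (fun b => hS al S b) b0 (- phi (b0 / r) * Wf al r S b0 / r).
Proof.
  intros Hr Hr2. unfold hS.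
  assert (D : forall (t z : R), is_derive (fun z => phi t * Q (al * t + z)) z (phi t * - phi (al * t + z))).
  { intros. apply is_derive_scal.
    apply (is_derive_ext (fun z => Q (al * t + z))); [auto|].
    replace (- phi (al * t + z)) with (1 * - phi (al * t + z)) by ring.
    apply (is_derive_comp Q (fun z => al * t + z)); [apply Q_deriv|]. auto_derive; auto. }
  assert (H := is_derive_RInt_param (fun b u => phi u * Q (al * u + b)) (- S) S b0).
  simpl in H.
  replace (- phi (b0 / r) * Wf al r S b0 / r) with (RInt (fun t => Derive (fun u => phi t * Q (al * t + u)) b0) (- S) S).
  - apply H.
    + apply filter_forall. intros; eexists; apply D.
    + intros t _. eapply continuity_2d_pt_ext.
      2: { apply (continuity_2d_pt_mult (fun b u => phi u) (fun b u => - phi (al * u + b))).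
           - apply continuity_1d_2d_pt_comp with (f := phi) (g := fun _ v => v); [apply phi_cpt| apply continuity_2d_pt_id2].
           - apply continuity_2d_pt_opp.
             apply continuity_1d_2d_pt_comp with (f := phi) (g := fun b u => al * u + b); [apply phi_cpt|].
             apply continuity_2d_pt_plus; [|apply continuity_2d_pt_id1].
             apply continuity_2d_pt_mult; [apply continuity_2d_pt_const|apply continuity_2d_pt_id2]. }
      intros x y. simpl. symmetry. apply is_derive_unique, D.
    + apply filter_forall; intros. apply exRInt_cont; intros; apply cont_prod_comp.
  - rewrite (RInt_extR _ (fun t => (- phi (b0 / r)) * phi (r * t + al * b0 / r))).
    + rewrite RInt_scalR by (apply exRInt_cont; intros; apply cont_of_derive; eexists;
        apply (is_derive_comp phi (fun t => r * t + al * b0 / r)); [apply phi_deriv| auto_derive; auto]).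
      rewrite RInt_phi_aff by auto. unfold Wf. Rfix. unfold Rdiv. ring.
    + intros t _. transitivity (phi t * - phi (al * t + b0)); [apply is_derive_unique, D|].
      Rfix. transitivity (- (phi t * phi (al * t + b0))); [ring|].
      rewrite (phi_prod al r t b0 Hr Hr2). ring.
Qed.

Lemma cpt_to_cont (f : R -> R) x : continuity_pt f x -> continuous f x.
Proof. intro H. apply continuity_pt_filterlim in H. exact H. Qed.

Lemma G_cont (al r S s : R) : 0 < r -> continuous (fun s => - phi (s / r) * Wf al r S s / r) s.
Proof.
  intros Hr. apply cpt_to_cont. unfold Wf, Rdiv.
  apply continuity_pt_mult; [|apply continuity_pt_const; intros ? ?; auto].
  apply continuity_pt_mult.
  - apply continuity_pt_opp. apply (continuity_pt_comp (fun s => s * / r) phi).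
    + apply continuity_pt_mult; [apply continuity_pt_id| apply continuity_pt_const; intros ? ?; auto].
    + apply phi_cpt.
  - apply continuity_pt_minus.
    + apply (continuity_pt_comp (fun s => r * S + al * s * / r) Phi0); [|apply Phi0_cpt].
      apply continuity_pt_plus; [apply continuity_pt_const; intros ? ?; auto|].
      apply continuity_pt_mult; [|apply continuity_pt_const; intros ? ?; auto].
      apply continuity_pt_mult; [apply continuity_pt_const; intros ? ?; auto| apply continuity_pt_id].
    + apply (continuity_pt_comp (fun s => r * - S + al * s * / r) Phi0); [|apply Phi0_cpt].
      apply continuity_pt_plus; [apply continuity_pt_const; intros ? ?; auto|].
      apply continuity_pt_mult; [|apply continuity_pt_const; intros ? ?; auto].
      apply continuity_pt_mult; [apply continuity_pt_const; intros ? ?; auto| apply continuity_pt_id].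
Qed.

Lemma is_RInt_uniqueR (f : R -> R) a b l : is_RInt f a b l -> RInt f a b = l.
Proof. exact (@is_RInt_unique R_CompleteNormedModule f a b l). Qed.

Lemma hS_FTC (al r S b B : R) : 0 < r -> r * r = 1 + al * al ->
  hS al S b = hS al S B + RInt (fun s => phi (s / r) / r * Wf al r S s) b B.
Proof.
  intros Hr Hr2.
  assert (H : is_RInt (fun s => - phi (s / r) * Wf al r S s / r) b B (minus (hS al S B) (hS al S b))).
  { apply (@is_RInt_derive R_CompleteNormedModule (fun b => hS al S b)).
    - intros; apply hS_deriv; auto.
    - intros; apply G_cont; auto. }
  apply is_RInt_uniqueR in H.
  rewrite (RInt_extR _ (fun s => -1 * (- phi (s / r) * Wf al r S s / r))).
  - rewrite RInt_scalR, H. unfold minus, plus, opp; simpl. ring.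
    apply exRInt_cont; intros; apply G_cont; auto.
  - intros; unfold Rdiv; ring.
Qed.

Lemma Wf_eq al r S s : Wf al r S s = 1 - Q (r * S + al * s / r) - Q (r * S - al * s / r).
Proof.
  unfold Wf. replace (r * - S + al * s / r) with (- (r * S - al * s / r)) by ring.
  rewrite Phi0_odd, !Phi0_Q. field.
Qed.

Lemma abs_betw x y : Rabs x <= y -> - y <= x <= y.
Proof. intros. split; [generalize (Rle_abs (- x)); rewrite Rabs_Ropp; lra| generalize (Rle_abs x); lra]. Qed.

Lemma CI_bound (al b S : R) : 0 < S ->
  Rabs b <= (Rabs al + / (1 + Rabs al)) * S ->
  Rabs (hS al S b - Q (b / sqrt (1 + al * al))) <= 4 * Q (S / ((1 + Rabs al) * sqrt (1 + al * al))).
Proof.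
  intros HS Hb.
  set (r := sqrt (1 + al * al)).
  assert (Hr2 : r * r = 1 + al * al) by (apply sqrt_sqrt; nra).
  assert (Hr : 0 < r) by (apply sqrt_lt_R0; nra).
  assert (Hr1 : 1 <= r) by nra.
  set (aa := Rabs al).
  assert (Haa : 0 <= aa) by apply Rabs_pos.
  assert (Haa2 : aa * aa = al * al) by (unfold aa; rewrite <- Rabs_mult; apply Rabs_pos_eq; nra).
  assert (Hal : - aa <= al <= aa) by (apply abs_betw; unfold aa; lra).
  set (kp := aa + / (1 + aa)).
  assert (Hinv : 0 < / (1 + aa)) by (apply Rinv_0_lt_compat; lra).
  assert (Hinv1 : / (1 + aa) * (1 + aa) = 1) by (field; lra).
  set (B := kp * S).
  assert (HbB : - B <= b <= B) by (apply abs_betw; unfold B, kp; fold aa in Hb; lra).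
  set (z0 := S / ((1 + aa) * r)).
  assert (Hz0 : 0 < z0) by (unfold z0; apply Rdiv_lt_0_compat; nra).
  set (Q0 := Q z0).
  assert (HQ0 : 0 <= Q0) by apply Q_nonneg.
  assert (Key : forall s, - B <= s <= B -> z0 <= r * S - aa * Rabs s / r).
  { intros s Hs. assert (Rabs s <= B) by (apply Rabs_le; lra).
    unfold z0.
    assert (E : r * S - aa * B / r = S / ((1 + aa) * r)).
    { assert (E1 : r * r - aa * kp = / (1 + aa)) by (unfold kp; rewrite Hr2, <- Haa2; field; lra).
      assert (E2 : r * S - aa * B / r = S * (r * r - aa * kp) / r) by (unfold B; field; lra).
      rewrite E2, E1. field. split; lra. }
    rewrite <- E. assert (aa * Rabs s / r <= aa * B / r).
    { unfold Rdiv. apply Rmult_le_compat_r; [left; apply Rinv_0_lt_compat; lra|]. nra. }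
    lra. }
  assert (HW : forall s, - B <= s <= B -> 1 - 2 * Q0 <= Wf al r S s <= 1).
  { intros s Hs. rewrite Wf_eq. assert (K := Key s Hs).
    assert (Rabs (al * s / r) <= aa * Rabs s / r).
    { unfold Rdiv. rewrite !Rabs_mult, Rabs_inv, (Rabs_pos_eq r); [unfold aa; lra| lra]. }
    generalize (abs_betw (al * s / r) _ H); intros.
    assert (Q (r * S + al * s / r) <= Q0) by (apply Q_decr; lra).
    assert (Q (r * S - al * s / r) <= Q0) by (apply Q_decr; lra).
    generalize (Q_nonneg (r * S + al * s / r)) (Q_nonneg (r * S - al * s / r)). lra. }
  rewrite (hS_FTC al r S b B Hr Hr2).
  set (A := RInt (fun s => phi (s / r) / r * Wf al r S s) b B).
  assert (ex1 : ex_RInt (fun s => phi (s / r) / r) b B).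
  { apply exRInt_cont. intros. apply cpt_to_cont. unfold Rdiv. apply continuity_pt_mult; [|apply continuity_pt_const; intros ? ?; auto].
    apply (continuity_pt_comp (fun s => s * / r) phi); [|apply phi_cpt].
    apply continuity_pt_mult; [apply continuity_pt_id| apply continuity_pt_const; intros ? ?; auto]. }
  assert (ex2 : ex_RInt (fun s => phi (s / r) / r * Wf al r S s) b B).
  { apply exRInt_cont. intros z _. apply cpt_to_cont.
    assert (C := G_cont al r S z Hr). apply continuity_pt_filterlim in C.
    apply (continuity_pt_ext (fun s => -1 * (- phi (s / r) * Wf al r S s / r)) (fun s => phi (s / r) / r * Wf al r S s)).
    - intros; unfold Rdiv; ring.
    - apply continuity_pt_mult; [apply continuity_pt_const; intros ? ?; auto| exact C]. }
  assert (ex3 : ex_RInt (fun s => (1 - 2 * Q0) * (phi (s / r) / r)) b B).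
  { apply (ex_RInt_scal (V := R_NormedModule)); auto. }
  assert (I1 : RInt (fun s => phi (s / r) / r) b B = Q (b / r) - Q (B / r)).
  { rewrite (RInt_extR _ (fun y => phi ((y - 0) / r) / r)).
    - rewrite RInt_phi_lin by auto. rewrite !Phi0_Q. replace (B - 0) with B by ring. replace (b - 0) with b by ring. Rfix. ring.
    - intros. replace (x - 0) with x by ring. auto. }
  assert (Aup : A <= Q (b / r) - Q (B / r)).
  { rewrite <- I1. apply RInt_le; auto; [lra|]. intros s Hs.
    assert (H1 := HW s ltac:(lra)). assert (0 < phi (s / r) / r) by (apply Rdiv_lt_0_compat; [apply phi_pos|lra]).
    nra. }
  assert (Alow : (1 - 2 * Q0) * (Q (b / r) - Q (B / r)) <= A).
  { rewrite <- I1. rewrite <- RInt_scalR by auto. apply RInt_le; auto; [lra|]. intros s Hs.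
    assert (H1 := HW s ltac:(lra)). assert (0 < phi (s / r) / r) by (apply Rdiv_lt_0_compat; [apply phi_pos|lra]).
    nra. }
  assert (HQbB : Q (B / r) <= Q (b / r)).
  { apply Q_decr. unfold Rdiv. apply Rmult_le_compat_r; [left; apply Rinv_0_lt_compat|]; lra. }
  assert (HQB : Q (B / r) <= Q0).
  { apply Q_decr. unfold z0, B, kp. unfold Rdiv. rewrite Rinv_mult.
    rewrite <- Rmult_assoc. apply Rmult_le_compat_r; [left; apply Rinv_0_lt_compat; lra|].
    rewrite Rmult_comm. apply Rmult_le_compat_r; lra. }
  assert (HQ1 : Q (S / (1 + aa)) <= Q0).
  { apply Q_decr. unfold z0. unfold Rdiv. apply Rmult_le_compat_l; [lra|].
    apply Rinv_le_contravar; [lra|]. nra. }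
  assert (hB : 0 <= hS al S B <= Q0).
  { unfold hS. split.
    - apply RInt_ge_0; [lra| apply exRInt_cont; intros; apply cont_prod_comp|].
      intros. apply Rmult_le_pos; [left; apply phi_pos| apply Q_nonneg].
    - apply Rle_trans with (RInt (fun u => Q (S / (1 + aa)) * phi u) (- S) S).
      + apply RInt_le; [lra| apply exRInt_cont; intros; apply cont_prod_comp| |].
        * apply (ex_RInt_scal (V := R_NormedModule)). apply ex_RInt_phi.
        * intros u Hu. rewrite Rmult_comm. apply Rmult_le_compat_r; [left; apply phi_pos|].
          apply Q_decr. assert (Rabs u <= S) by (apply Rabs_le; lra).
          assert (E : S / (1 + aa) = kp * S - aa * S) by (unfold kp; field; lra).
          rewrite E. unfold B. assert (- (aa * S) <= al * u).
          { destruct (Rle_dec 0 u). nra. nra. }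
          lra.
      + rewrite RInt_scalR by apply ex_RInt_phi. assert (H1 := RInt_phi_sym_le1 S).
        assert (H2 := Q_nonneg (S / (1 + aa))). assert (0 <= RInt phi (- S) S).
        { apply RInt_ge_0; [lra| apply ex_RInt_phi| intros; left; apply phi_pos]. }
        nra. }
  assert (HX : 0 <= Q (b / r) - Q (B / r) <= 1).
  { generalize (Q_nonneg (B / r)) (Q_le1 (b / r)). lra. }
  assert (Q0 * (Q (b / r) - Q (B / r)) <= Q0) by nra. fold A. assert (Alow2 : Q (b / r) - Q (B / r) - 2 * (Q0 * (Q (b / r) - Q (B / r))) <= A) by (eapply Rle_trans; [|exact Alow]; right; ring). generalize (Q_nonneg (B / r)); intro. apply Rabs_le. split; lra.
Qed.

Notation ind := Defs.ind.

Lemma ex_RInt_scalR (f : R -> R) a b k : ex_RInt f a b -> ex_RInt (fun y => k * f y) a b.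
Proof. exact (@ex_RInt_scal R_NormedModule f a b k). Qed.
Lemma ex_RInt_comp_linR (f : R -> R) u v a b : ex_RInt f (u * a + v) (u * b + v) ->
  ex_RInt (fun y => u * f (u * y + v)) a b.
Proof. exact (@ex_RInt_comp_lin R_NormedModule f u v a b). Qed.
Lemma ex_RInt_swapR (f : R -> R) a b : ex_RInt f a b -> ex_RInt f b a.
Proof. exact (@ex_RInt_swap R_NormedModule f a b). Qed.
Lemma ex_RInt_ChaslesR (f : R -> R) a b c : ex_RInt f a b -> ex_RInt f b c -> ex_RInt f a c.
Proof. exact (@ex_RInt_Chasles R_NormedModule f a b c). Qed.
Lemma ex_RInt_extR (f g : R -> R) a b : (forall x, Rmin a b < x < Rmax a b -> f x = g x) ->
  ex_RInt f a b -> ex_RInt g a b.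
Proof. exact (@ex_RInt_ext R_NormedModule f g a b). Qed.
Lemma ex_RInt_minusR (f g : R -> R) a b : ex_RInt f a b -> ex_RInt g a b -> ex_RInt (fun y => f y - g y) a b.
Proof. exact (@ex_RInt_minus R_NormedModule f g a b). Qed.
Lemma RInt_minusR (f g : R -> R) a b : ex_RInt f a b -> ex_RInt g a b ->
  RInt (fun y => f y - g y) a b = RInt f a b - RInt g a b.
Proof. exact (@RInt_minus R_CompleteNormedModule f g a b). Qed.
Lemma RInt_swapR (f : R -> R) a b : ex_RInt f a b -> RInt f b a = - RInt f a b.
Proof. intros H. rewrite <- (@opp_RInt_swap R_CompleteNormedModule f a b H). reflexivity. Qed.
Lemma RInt_pointR (f : R -> R) a : RInt f a a = 0.
Proof. exact (@RInt_point R_CompleteNormedModule a f). Qed.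

Lemma seq_lim_eq u l : Un_cv u l -> seq_lim u = l.
Proof.
  intros H. unfold seq_lim. destruct excluded_middle_informative as [e|n].
  - destruct constructive_indefinite_description as [l' H']. simpl. eapply UL_sequence; eauto.
  - exfalso; apply n; eauto.
Qed.

Lemma DRInt_eq f a b : ex_RInt f a b -> Defs.RInt f a b = RInt f a b.
Proof.
  intros H. unfold Defs.RInt. destruct excluded_middle_informative as [e|n].
  - symmetry. apply RInt_Reals.
  - exfalso; apply n. exists (ex_RInt_Reals_0 _ _ _ H). auto.
Qed.

Lemma DRInt_not f a b : ~ ex_RInt f a b -> Defs.RInt f a b = 0.
Proof.
  intros H. unfold Defs.RInt. destruct excluded_middle_informative as [e|n]; auto.
  exfalso. destruct e as [pr _]. apply H. apply ex_RInt_Reals_1; auto.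
Qed.

Lemma ind_iff (P P' : Prop) : (P <-> P') -> ind P = ind P'.
Proof. intros H. apply PropExtensionality.propositional_extensionality in H. rewrite H. auto. Qed.

Lemma ind_1 (P : Prop) : P -> ind P = 1.
Proof. intros. unfold ind. destruct excluded_middle_informative; tauto. Qed.
Lemma ind_0 (P : Prop) : ~ P -> ind P = 0.
Proof. intros. unfold ind. destruct excluded_middle_informative; tauto. Qed.

Lemma ex_RInt_comp_negR (g : R -> R) T : ex_RInt g (- T) T -> ex_RInt (fun y => g (- y)) (- T) T.
Proof.
  intros H. apply (ex_RInt_extR (fun y => -1 * (-1 * g (-1 * y + 0)))).
  - intros. replace (-1 * x + 0) with (- x) by ring. ring.
  - apply ex_RInt_scalR. apply (ex_RInt_comp_linR g (-1) 0 (- T) T).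
    replace (-1 * - T + 0) with T by ring. replace (-1 * T + 0) with (- T) by ring.
    apply ex_RInt_swapR. auto.
Qed.

Lemma DRInt_neg (g : R -> R) T : Defs.RInt (fun y => g (- y)) (- T) T = Defs.RInt g (- T) T.
Proof.
  destruct (Classical_Prop.classic (ex_RInt g (- T) T)) as [H|H].
  - rewrite !DRInt_eq; auto; [| apply ex_RInt_comp_negR; auto].
    assert (H' : ex_RInt g (-1 * - T + 0) (-1 * T + 0)).
    { replace (-1 * - T + 0) with T by ring. replace (-1 * T + 0) with (- T) by ring.
      apply ex_RInt_swapR. auto. }
    assert (E := RInt_comp_linR g (-1) 0 (- T) T H').
    replace (-1 * - T + 0) with T in E by ring. replace (-1 * T + 0) with (- T) in E by ring.
    rewrite (RInt_extR _ (fun y => -1 * (-1 * g (-1 * y + 0)))).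
    + rewrite RInt_scalR, E.
      * rewrite RInt_swapR; auto. ring.
      * apply (ex_RInt_comp_linR g (-1) 0 (- T) T). auto.
    + intros. replace (-1 * x + 0) with (- x) by ring. ring.
  - rewrite !DRInt_not; auto. intros H'. apply H. apply ex_RInt_comp_negR in H'.
    eapply ex_RInt_extR; [|exact H']. intros. simpl. rewrite Ropp_involutive. auto.
Qed.

Lemma dens_yflip sx sy rho x y : bvn_density sx sy (- rho) x y = bvn_density sx sy rho x (- y).
Proof. unfold bvn_density. replace ((- rho) ^ 2) with (rho ^ 2) by ring.
  replace (x ^ 2 / sx ^ 2 - 2 * - rho * x * y / (sx * sy) + y ^ 2 / sy ^ 2) with
    (x ^ 2 / sx ^ 2 - 2 * rho * x * (- y) / (sx * sy) + (- y) ^ 2 / sy ^ 2) by (unfold Rdiv; ring).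
  reflexivity. Qed.

Lemma dens_xflip sx sy rho x y : bvn_density sx sy (- rho) x y = bvn_density sx sy rho (- x) y.
Proof. unfold bvn_density. replace ((- rho) ^ 2) with (rho ^ 2) by ring.
  replace (x ^ 2 / sx ^ 2 - 2 * - rho * x * y / (sx * sy) + y ^ 2 / sy ^ 2) with
    ((- x) ^ 2 / sx ^ 2 - 2 * rho * (- x) * y / (sx * sy) + y ^ 2 / sy ^ 2) by (unfold Rdiv; ring).
  reflexivity. Qed.

Lemma bvn_prob_ext sx sy rho (C C' : R -> R -> Prop) : (forall x y, C x y <-> C' x y) ->
  bvn_prob sx sy rho C = bvn_prob sx sy rho C'.
Proof.
  intros H. assert (E : C = C').
  { apply functional_extensionality; intro x; apply functional_extensionality; intro y.
    apply PropExtensionality.propositional_extensionality; auto. }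
  rewrite E; auto.
Qed.

Lemma bvn_prob_yflip sx sy rho (C : R -> R -> Prop) :
  bvn_prob sx sy rho C = bvn_prob sx sy (- rho) (fun x y => C x (- y)).
Proof.
  unfold bvn_prob. f_equal. apply functional_extensionality; intro n. f_equal.
  apply functional_extensionality; intro x.
  rewrite <- (DRInt_neg (fun y => bvn_density sx sy rho x y * ind (C x y))).
  f_equal. apply functional_extensionality; intro y. rewrite dens_yflip. auto.
Qed.

Lemma bvn_prob_xflip sx sy rho (C : R -> R -> Prop) :
  bvn_prob sx sy rho C = bvn_prob sx sy (- rho) (fun x y => C (- x) y).
Proof.
  unfold bvn_prob. f_equal. apply functional_extensionality; intro n.
  rewrite <- (DRInt_neg (fun x => Defs.RInt (fun y => bvn_density sx sy rho x y * ind (C x y)) (- INR n) (INR n))).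
  f_equal. apply functional_extensionality; intro x. f_equal.
  apply functional_extensionality; intro y. rewrite dens_xflip. auto.
Qed.

Lemma conv_bound (u : nat -> R) l C N0 : (forall n, (N0 <= n)%nat -> Rabs (u n - l) <= C / INR n) -> Un_cv u l.
Proof.
  intros H eps Heps.
  destruct (archimed (Rabs C / eps)) as [Ha _].
  assert (Hz : (0 <= up (Rabs C / eps))%Z).
  { apply le_IZR. assert (0 <= Rabs C / eps) by (apply Rdiv_le_0_compat; [apply Rabs_pos|lra]). lra. }
  exists (Nat.max (S N0) (S (Z.to_nat (up (Rabs C / eps))))).
  intros n Hn. unfold R_dist.
  assert (Hn1 : (N0 <= n)%nat) by lia.
  assert (Hn2 : (S (Z.to_nat (up (Rabs C / eps))) <= n)%nat) by lia.
  apply le_INR in Hn2. rewrite S_INR, INR_IZR_INZ, Z2Nat.id in Hn2; auto.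
  assert (Hz2 := IZR_le _ _ Hz). simpl in Hz2. assert (Hnpos : 0 < INR n) by lra.
  apply Rle_lt_trans with (C / INR n); auto.
  apply Rle_lt_trans with (Rabs C / INR n).
  { unfold Rdiv. apply Rmult_le_compat_r; [left; apply Rinv_0_lt_compat; auto| apply Rle_abs]. }
  apply Rmult_lt_reg_r with (INR n); auto. unfold Rdiv. rewrite Rmult_assoc, Rinv_l; [|lra].
  assert (Rabs C / eps * eps = Rabs C) by (field; lra).
  assert (Rabs C / eps < INR n) by lra. nra.
Qed.

Definition clamp (a b c : R) : R := Rmax a (Rmin c b).

Lemma clamp_bounds a b c : a <= b -> a <= clamp a b c <= b.
Proof. intros. unfold clamp, Rmax, Rmin. repeat destruct Rle_dec; lra. Qed.

Lemma clamp_lo a b c y : a < y < clamp a b c -> y < c.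
Proof. unfold clamp, Rmax, Rmin. repeat destruct Rle_dec; lra. Qed.

Lemma clamp_hi a b c y : clamp a b c < y < b -> c < y.
Proof. unfold clamp, Rmax, Rmin. repeat destruct Rle_dec; lra. Qed.

Lemma RInt_zeroR a b : RInt (fun _ => 0) a b = 0.
Proof. rewrite (@RInt_const R_CompleteNormedModule). unfold scal; simpl; unfold mult; simpl. ring. Qed.

Lemma cut_gt (h : R -> R) a b c : a <= b -> (forall x, continuous h x) ->
  ex_RInt (fun y => h y * ind (y > c)) a b /\
  RInt (fun y => h y * ind (y > c)) a b = RInt h (clamp a b c) b.
Proof.
  intros Hab Hh. set (m := clamp a b c).
  assert (Hm := clamp_bounds a b c Hab). fold m in Hm.
  assert (E1 : ex_RInt (fun y => h y * ind (y > c)) a m).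
  { apply (ex_RInt_extR (fun _ => 0)).
    - intros y Hy. rewrite Rmin_left, Rmax_right in Hy by lra.
      rewrite ind_0; [ring|]. assert (y < c) by (apply (clamp_lo a b c); fold m; lra). lra.
    - apply exRInt_cont; intros; apply continuous_const. }
  assert (E2 : ex_RInt (fun y => h y * ind (y > c)) m b).
  { apply (ex_RInt_extR h).
    - intros y Hy. rewrite Rmin_left, Rmax_right in Hy by lra.
      rewrite ind_1; [ring|]. apply (clamp_hi a b c); fold m; lra.
    - apply exRInt_cont; intros; apply Hh. }
  split.
  - eapply ex_RInt_ChaslesR; eauto.
  - rewrite <- (RInt_ChaslesR _ a m b E1 E2).
    rewrite (RInt_extR _ (fun _ => 0) a m).
    + rewrite RInt_zeroR. rewrite (RInt_extR _ h m b). Rfix; ring.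
      intros y Hy. rewrite Rmin_left, Rmax_right in Hy by lra.
      rewrite ind_1; [ring|]. apply (clamp_hi a b c); fold m; lra.
    + intros y Hy. rewrite Rmin_left, Rmax_right in Hy by lra.
      rewrite ind_0; [ring|]. assert (y < c) by (apply (clamp_lo a b c); fold m; lra). lra.
Qed.

Lemma Rmax_abs u v : Rmax u v = (u + v + Rabs (u - v)) / 2.
Proof. unfold Rmax, Rabs. repeat destruct Rle_dec; repeat destruct Rcase_abs; lra. Qed.
Lemma Rmin_abs u v : Rmin u v = (u + v - Rabs (u - v)) / 2.
Proof. unfold Rmin, Rabs. repeat destruct Rle_dec; repeat destruct Rcase_abs; lra. Qed.

Lemma clamp_cpt a b (L : R -> R) x : (forall x, continuity_pt L x) -> continuity_pt (fun x => clamp a b (L x)) x.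
Proof.
  intros HL. unfold clamp.
  apply (continuity_pt_ext (fun x => (a + (L x + b - Rabs (L x - b)) / 2 + Rabs (a - (L x + b - Rabs (L x - b)) / 2)) / 2)).
  { intros. rewrite Rmax_abs, Rmin_abs. auto. }
  assert (Hc : forall k : R, continuity_pt (fun _ => k) x) by (intros; apply continuity_pt_const; intros ? ?; auto).
  assert (HA : forall g : R -> R, continuity_pt g x -> continuity_pt (fun x => Rabs (g x)) x).
  { intros g Hg. apply (continuity_pt_comp g Rabs); auto. apply Rcontinuity_abs. }
  unfold Rdiv.
  apply continuity_pt_mult; auto. apply continuity_pt_plus; [apply continuity_pt_plus; auto|].
  - apply continuity_pt_mult; auto. apply continuity_pt_minus; [apply continuity_pt_plus; auto|].
    apply HA. apply continuity_pt_minus; auto.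
  - apply HA. apply continuity_pt_minus; auto. apply continuity_pt_mult; auto.
    apply continuity_pt_minus; [apply continuity_pt_plus; auto|]. apply HA, continuity_pt_minus; auto.
Qed.

Definition tau (sg rho : R) : R := sg * sqrt (1 - rho * rho).

Lemma tau_pos sg rho : 0 < sg -> -1 < rho < 1 -> 0 < tau sg rho.
Proof. intros. unfold tau. apply Rmult_lt_0_compat; auto. apply sqrt_lt_R0. nra. Qed.

Lemma dens_factor sg rho x y : 0 < sg -> -1 < rho < 1 ->
  bvn_density sg sg rho x y = (phi (x / sg) / sg) * (phi ((y - rho * x) / tau sg rho) / tau sg rho).
Proof.
  intros Hs Hr. unfold bvn_density, phi, gexp, tau.
  set (s1 := sqrt (1 - rho * rho)).
  assert (Hs1 : 0 < s1) by (apply sqrt_lt_R0; nra).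
  assert (Hs12 : s1 * s1 = 1 - rho * rho) by (apply sqrt_sqrt; nra).
  replace (sqrt (1 - rho ^ 2)) with s1 by (unfold s1; f_equal; ring).
  assert (Hq := sq2pi_sq). assert (Hq0 := sq2pi_pos).
  assert (E : - / (2 * (1 - rho ^ 2)) * (x ^ 2 / sg ^ 2 - 2 * rho * x * y / (sg * sg) + y ^ 2 / sg ^ 2)
            = - (x / sg * (x / sg)) / 2 + - ((y - rho * x) / (sg * s1) * ((y - rho * x) / (sg * s1))) / 2).
  { assert (E2 : (y - rho * x) / (sg * s1) * ((y - rho * x) / (sg * s1)) = (y - rho * x) * (y - rho * x) / (sg * sg * (1 - rho * rho))).
    { rewrite <- Hs12. field. split; lra. }
    rewrite E2. replace (rho ^ 2) with (rho * rho) by ring. field. split; [nra| lra]. }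
  rewrite E, exp_plus. replace (2 * PI) with (sq2pi * sq2pi) by lra. field. repeat split; lra.
Qed.

Definition phis (sg x : R) : R := phi (x / sg) / sg.

Lemma phis_pos sg x : 0 < sg -> 0 < phis sg x.
Proof. intros. unfold phis. apply Rdiv_lt_0_compat; auto. apply phi_pos. Qed.

Lemma phis_cpt sg x : continuity_pt (phis sg) x.
Proof.
  unfold phis, Rdiv. apply continuity_pt_mult; [|apply continuity_pt_const; intros ? ?; auto].
  apply (continuity_pt_comp (fun x => x * / sg) phi); [|apply phi_cpt].
  apply continuity_pt_mult; [apply continuity_pt_id| apply continuity_pt_const; intros ? ?; auto].
Qed.

Lemma RInt_phis_le1 sg T : 0 < sg -> RInt (phis sg) (- T) T <= 1.
Proof.
  intros Hs. unfold phis. rewrite (RInt_extR _ (fun y => phi ((y - 0) / sg) / sg)).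
  - rewrite RInt_phi_lin by auto. replace ((T - 0) / sg) with (T / sg) by (field; lra).
    replace ((- T - 0) / sg) with (- (T / sg)) by (field; lra). rewrite Phi0_odd, !Phi0_Q.
    generalize (Q_nonneg (T / sg)). lra.
  - intros. replace (x - 0) with x by ring. auto.
Qed.

Lemma RInt_phis_nonneg sg T : 0 < sg -> 0 <= T -> 0 <= RInt (phis sg) (- T) T.
Proof.
  intros. apply RInt_ge_0; [lra| apply exRInt_cont; intros; apply cpt_to_cont, phis_cpt|].
  intros; left; apply phis_pos; auto.
Qed.

Lemma psi_cpt m s y : continuity_pt (fun y => phi ((y - m) / s) / s) y.
Proof.
  unfold Rdiv. apply continuity_pt_mult; [|apply continuity_pt_const; intros ? ?; auto].
  apply (continuity_pt_comp (fun y => (y - m) * / s) phi); [|apply phi_cpt].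
  apply continuity_pt_mult; [|apply continuity_pt_const; intros ? ?; auto].
  apply continuity_pt_minus; [apply continuity_pt_id| apply continuity_pt_const; intros ? ?; auto].
Qed.

Lemma inner_qpos sg rho p q d T x : 0 < sg -> -1 < rho < 1 -> 0 < q -> 0 <= T ->
  Defs.RInt (fun y => bvn_density sg sg rho x y * ind (p * x + q * y > d)) (- T) T =
  phis sg x * (Phi0 ((T - rho * x) / tau sg rho) - Phi0 ((clamp (- T) T ((d - p * x) / q) - rho * x) / tau sg rho)).
Proof.
  intros Hs Hr Hq HT.
  assert (Ht := tau_pos sg rho Hs Hr).
  assert (Hh : forall x0, continuous (fun y => bvn_density sg sg rho x y) x0).
  { intros. apply cpt_to_cont. apply (continuity_pt_ext (fun y => phis sg x * (phi ((y - rho * x) / tau sg rho) / tau sg rho))).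
    - intros. rewrite dens_factor; auto.
    - unfold Rdiv. apply continuity_pt_mult; [apply continuity_pt_const; intros ? ?; auto|].
      apply continuity_pt_mult; [|apply continuity_pt_const; intros ? ?; auto].
      apply (continuity_pt_comp (fun y => (y - rho * x) * / tau sg rho) phi); [|apply phi_cpt].
      apply continuity_pt_mult; [|apply continuity_pt_const; intros ? ?; auto].
      apply continuity_pt_minus; [apply continuity_pt_id| apply continuity_pt_const; intros ? ?; auto]. }
  assert (E : (fun y => bvn_density sg sg rho x y * ind (p * x + q * y > d)) =
              (fun y => bvn_density sg sg rho x y * ind (y > (d - p * x) / q))).
  { apply functional_extensionality; intro y. f_equal. apply ind_iff.
    split; intros H.
    - apply Rmult_lt_reg_r with q; auto. unfold Rdiv. rewrite Rmult_assoc, Rinv_l; lra.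
    - apply Rmult_lt_compat_r with (r := q) in H; auto. unfold Rdiv in H. rewrite Rmult_assoc, Rinv_l in H; lra. }
  rewrite E.
  destruct (cut_gt (fun y => bvn_density sg sg rho x y) (- T) T ((d - p * x) / q) ltac:(lra) Hh) as [Hex Hv].
  rewrite DRInt_eq by auto. rewrite Hv.
  rewrite (RInt_extR _ (fun y => phis sg x * (phi ((y - rho * x) / tau sg rho) / tau sg rho))).
  - rewrite RInt_scalR. rewrite RInt_phi_lin by auto. reflexivity.
    apply exRInt_cont. intros. apply cpt_to_cont, psi_cpt.
  - intros. rewrite dens_factor; auto.
Qed.

Lemma clamp_in a b c : a <= c <= b -> clamp a b c = c.
Proof. intros. unfold clamp, Rmax, Rmin. repeat destruct Rle_dec; lra. Qed.
Lemma clamp_above a b c : a <= b -> b <= c -> clamp a b c = b.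
Proof. intros. unfold clamp, Rmax, Rmin. repeat destruct Rle_dec; lra. Qed.
Lemma clamp_below a b c : a <= b -> c <= a -> clamp a b c = a.
Proof. intros. unfold clamp, Rmax, Rmin. repeat destruct Rle_dec; lra. Qed.

Definition Fn (sg rho p q d T x : R) : R :=
  phis sg x * (Phi0 ((T - rho * x) / tau sg rho) - Phi0 ((clamp (- T) T ((d - p * x) / q) - rho * x) / tau sg rho)).
Definition II (sg rho p q d x : R) : R :=
  phis sg x * Q (((d - p * x) / q - rho * x) / tau sg rho).

Lemma cst_cpt (k x : R) : continuity_pt (fun _ => k) x.
Proof. apply continuity_pt_const; intros ? ?; auto. Qed.

Lemma Fn_cpt sg rho p q d T x : continuity_pt (Fn sg rho p q d T) x.
Proof.
  unfold Fn. apply continuity_pt_mult; [apply phis_cpt|]. unfold Rdiv.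
  apply continuity_pt_minus.
  - apply (continuity_pt_comp (fun x => (T - rho * x) * / tau sg rho) Phi0); [|apply Phi0_cpt].
    apply continuity_pt_mult; [|apply cst_cpt]. apply continuity_pt_minus; [apply cst_cpt|].
    apply continuity_pt_mult; [apply cst_cpt| apply continuity_pt_id].
  - apply (continuity_pt_comp (fun x => (clamp (- T) T ((d - p * x) * / q) - rho * x) * / tau sg rho) Phi0); [|apply Phi0_cpt].
    apply continuity_pt_mult; [|apply cst_cpt]. apply continuity_pt_minus.
    + apply (clamp_cpt (- T) T (fun x => (d - p * x) * / q)). intros.
      apply continuity_pt_mult; [|apply cst_cpt]. apply continuity_pt_minus; [apply cst_cpt|].
      apply continuity_pt_mult; [apply cst_cpt| apply continuity_pt_id].
    + apply continuity_pt_mult; [apply cst_cpt| apply continuity_pt_id].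
Qed.

Lemma II_cpt sg rho p q d x : continuity_pt (II sg rho p q d) x.
Proof.
  unfold II. apply continuity_pt_mult; [apply phis_cpt|]. unfold Rdiv.
  apply (continuity_pt_comp (fun x => ((d - p * x) * / q - rho * x) * / tau sg rho) Q); [|apply Q_cpt].
  apply continuity_pt_mult; [|apply cst_cpt]. apply continuity_pt_minus.
  - apply continuity_pt_mult; [|apply cst_cpt]. apply continuity_pt_minus; [apply cst_cpt|].
    apply continuity_pt_mult; [apply cst_cpt| apply continuity_pt_id].
  - apply continuity_pt_mult; [apply cst_cpt| apply continuity_pt_id].
Qed.

Lemma Fn_II_pt sg rho p q d T x : 0 < sg -> -1 < rho < 1 -> 0 <= T -> - T <= x <= T ->
  Rabs (Fn sg rho p q d T x - II sg rho p q d x) <=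
  phis sg x * (Q ((T - rho * x) / tau sg rho) + Q ((T + rho * x) / tau sg rho)).
Proof.
  intros Hs Hr HT Hx. unfold Fn, II.
  assert (Ht := tau_pos sg rho Hs Hr). set (t := tau sg rho) in *.
  assert (Hp := phis_pos sg x Hs).
  set (L := (d - p * x) / q).
  set (a := (T - rho * x) / t). set (l := (L - rho * x) / t). set (b := (- T - rho * x) / t).
  assert (Hb : (T + rho * x) / t = - b) by (unfold b; field; lra).
  rewrite Hb.
  fold L. fold a. fold l.
  assert (Hdiv : forall u v, u <= v -> u / t <= v / t).
  { intros. unfold Rdiv. apply Rmult_le_compat_r; [left; apply Rinv_0_lt_compat|]; lra. }
  assert (Qa := Q_nonneg a). assert (Qb := Q_nonneg (- b)).
  replace (phis sg x * (Phi0 a - Phi0 ((clamp (- T) T L - rho * x) / t)) - phis sg x * Q l)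
    with (phis sg x * (Q ((clamp (- T) T L - rho * x) / t) - Q a - Q l)) by (rewrite !Phi0_Q; ring).
  rewrite Rabs_mult, (Rabs_pos_eq (phis sg x)) by lra.
  apply Rmult_le_compat_l; [lra|].
  destruct (Rle_dec L T) as [H1|H1]; destruct (Rle_dec (- T) L) as [H2|H2].
  - rewrite clamp_in by lra. fold l. replace (Q l - Q a - Q l) with (- Q a) by ring.
    rewrite Rabs_Ropp, Rabs_pos_eq; lra.
  - rewrite clamp_below by lra. fold b.
    assert (Hlb : l <= b) by (apply Hdiv; lra).
    assert (Q b <= Q l) by (apply Q_decr; auto).
    assert (Q l <= 1) by apply Q_le1. rewrite Q_neg in Qb |- *.
    apply Rabs_le. lra.
  - rewrite clamp_above by lra. fold a.
    assert (Hal : a <= l) by (apply Hdiv; lra).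
    assert (Q l <= Q a) by (apply Q_decr; auto). assert (0 <= Q l) by apply Q_nonneg.
    replace (Q a - Q a - Q l) with (- Q l) by ring. rewrite Rabs_Ropp, Rabs_pos_eq; lra.
  - lra.
Qed.

Lemma int_err sg rho p q d T : 0 < sg -> -1 < rho < 1 -> 0 <= T ->
  Rabs (RInt (Fn sg rho p q d T) (- T) T - RInt (II sg rho p q d) (- T) T) <=
  2 * Q (T * (1 - Rabs rho) / tau sg rho).
Proof.
  intros Hs Hr HT.
  assert (Ht := tau_pos sg rho Hs Hr).
  set (Q0 := Q (T * (1 - Rabs rho) / tau sg rho)).
  assert (HQ0 : 0 <= Q0) by apply Q_nonneg.
  assert (exF : ex_RInt (Fn sg rho p q d T) (- T) T) by (apply exRInt_cont; intros; apply cpt_to_cont, Fn_cpt).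
  assert (exI : ex_RInt (II sg rho p q d) (- T) T) by (apply exRInt_cont; intros; apply cpt_to_cont, II_cpt).
  assert (exP : ex_RInt (fun x => 2 * Q0 * phis sg x) (- T) T).
  { apply ex_RInt_scalR. apply exRInt_cont; intros; apply cpt_to_cont, phis_cpt. }
  assert (Hpt : forall x, - T < x < T -> Rabs (Fn sg rho p q d T x - II sg rho p q d x) <= 2 * Q0 * phis sg x).
  { intros x Hx. eapply Rle_trans; [apply Fn_II_pt; auto; lra|].
    assert (Hrx : Rabs (rho * x) <= Rabs rho * T).
    { rewrite Rabs_mult. apply Rmult_le_compat_l; [apply Rabs_pos|]. apply Rabs_le; lra. }
    apply abs_betw in Hrx.
    assert (Hdiv : forall u v, u <= v -> u / tau sg rho <= v / tau sg rho).
    { intros. unfold Rdiv. apply Rmult_le_compat_r; [left; apply Rinv_0_lt_compat|]; lra. }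
    assert (Q ((T - rho * x) / tau sg rho) <= Q0) by (apply Q_decr, Hdiv; lra).
    assert (Q ((T + rho * x) / tau sg rho) <= Q0) by (apply Q_decr, Hdiv; lra).
    assert (Hp := phis_pos sg x Hs). nra. }
  rewrite <- RInt_minusR by auto.
  assert (H1 := RInt_phis_le1 sg T Hs). assert (H2 := RInt_phis_nonneg sg T Hs HT).
  assert (E : RInt (fun x => 2 * Q0 * phis sg x) (- T) T = 2 * Q0 * RInt (phis sg) (- T) T)
    by (apply RInt_scalR; apply exRInt_cont; intros; apply cpt_to_cont, phis_cpt).
  apply Rabs_le. split.
  - apply Rle_trans with (RInt (fun x => - (2 * Q0 * phis sg x)) (- T) T).
    + rewrite (RInt_extR _ (fun x => -1 * (2 * Q0 * phis sg x))) by (intros; ring).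
      rewrite RInt_scalR, E by auto. nra.
    + apply RInt_le; [lra| | apply ex_RInt_minusR; auto|].
      * apply (ex_RInt_extR (fun x => -1 * (2 * Q0 * phis sg x))); [intros; ring|]. apply ex_RInt_scalR; auto.
      * intros x Hx. generalize (abs_betw _ _ (Hpt x Hx)). lra.
  - apply Rle_trans with (RInt (fun x => 2 * Q0 * phis sg x) (- T) T).
    + apply RInt_le; [lra| apply ex_RInt_minusR; auto| auto|].
      intros x Hx. generalize (abs_betw _ _ (Hpt x Hx)). lra.
    + rewrite E. nra.
Qed.

Lemma II_value sg rho p q d T : 0 < sg -> -1 < rho < 1 -> q <> 0 ->
  RInt (II sg rho p q d) (- T) T =
  hS (- (p / q + rho) * sg / tau sg rho) (T / sg) (d / (q * tau sg rho)).
Proof.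
  intros Hs Hr Hq. assert (Ht := tau_pos sg rho Hs Hr).
  set (al := - (p / q + rho) * sg / tau sg rho). set (be := d / (q * tau sg rho)).
  unfold hS.
  assert (H := RInt_comp_linR (fun u => phi u * Q (al * u + be)) (/ sg) 0 (- T) T).
  replace (/ sg * - T + 0) with (- (T / sg)) in H by (field; lra).
  replace (/ sg * T + 0) with (T / sg) in H by (field; lra).
  rewrite <- H.
  - apply RInt_extR. intros x _. unfold II, phis.
    replace (/ sg * x + 0) with (x / sg) by (field; lra).
    replace (al * (x / sg) + be) with (((d - p * x) / q - rho * x) / tau sg rho).
    + unfold Rdiv. ring.
    + unfold al, be. field. repeat split; lra.
  - apply exRInt_cont. intros; apply cont_prod_comp.
Qed.

Lemma Q_tail_le z y : 0 < y -> y <= z -> Q z <= / y.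
Proof. intros. apply Rle_trans with (Q y); [apply Q_decr; auto| apply Q_tail; auto]. Qed.

Lemma HP_qpos_cv sg rho p q d : 0 < sg -> -1 < rho < 1 -> 0 < q ->
  Un_cv (fun n : nat => Defs.RInt (fun x => Defs.RInt (fun y => bvn_density sg sg rho x y * ind (p * x + q * y > d))
                                       (- INR n) (INR n)) (- INR n) (INR n))
        (Q (d / (q * tau sg rho) / sqrt (1 + (- (p / q + rho) * sg / tau sg rho) * (- (p / q + rho) * sg / tau sg rho)))).
Proof.
  intros Hs Hr Hq.
  assert (Ht := tau_pos sg rho Hs Hr).
  set (al := - (p / q + rho) * sg / tau sg rho). set (be := d / (q * tau sg rho)).
  set (r := sqrt (1 + al * al)).
  assert (Hr1 : 1 <= r).
  { unfold r. apply Rle_trans with (sqrt 1); [rewrite sqrt_1; lra| apply sqrt_le_1_alt; nra]. }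
  set (aa := Rabs al). assert (Haa : 0 <= aa) by apply Rabs_pos.
  set (kp := aa + / (1 + aa)).
  assert (Hkp : 0 < kp) by (unfold kp; assert (0 < / (1 + aa)) by (apply Rinv_0_lt_compat; lra); lra).
  set (rr := Rabs rho). assert (Hrr : rr < 1) by (unfold rr; apply Rabs_def1; lra).
  assert (Hrr0 : 0 <= rr) by apply Rabs_pos.
  set (C1 := 2 * (tau sg rho / (1 - rr)) + 4 * (sg * (1 + aa) * r)).
  destruct (archimed (Rabs be * sg / kp)) as [Ha _].
  apply (conv_bound _ _ C1 (S (Z.to_nat (up (Rabs be * sg / kp))))).
  intros n Hn. set (T := INR n).
  assert (HT : Rabs be * sg / kp < T).
  { unfold T. apply le_INR in Hn. rewrite S_INR in Hn.
    destruct (Z_le_gt_dec 0 (up (Rabs be * sg / kp))) as [Hz|Hz].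
    - rewrite INR_IZR_INZ, Z2Nat.id in Hn; auto. lra.
    - assert (Rabs be * sg / kp >= 0) by (apply Rle_ge; apply Rdiv_le_0_compat; [apply Rmult_le_pos; [apply Rabs_pos|lra]|lra]).
      apply Z.gt_lt in Hz. apply IZR_lt in Hz. lra. }
  assert (HTpos : 0 < T).
  { assert (0 <= Rabs be * sg / kp) by (apply Rdiv_le_0_compat; [apply Rmult_le_pos; [apply Rabs_pos|lra]|lra]). lra. }
  assert (Einner : (fun x => Defs.RInt (fun y => bvn_density sg sg rho x y * ind (p * x + q * y > d)) (- T) T) = Fn sg rho p q d T).
  { apply functional_extensionality; intro x. rewrite inner_qpos; auto; try lra.  }
  rewrite Einner.
  rewrite DRInt_eq by (apply exRInt_cont; intros; apply cpt_to_cont, Fn_cpt).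
  assert (E1 := int_err sg rho p q d T Hs Hr ltac:(lra)).
  rewrite II_value in E1 by (auto; lra). fold al be in E1.
  assert (E2 := CI_bound al be (T / sg) ltac:(apply Rdiv_lt_0_compat; lra)).
  fold aa r in E2.
  assert (Hb : Rabs be <= kp * (T / sg)).
  { assert (E : Rabs be * sg / kp * kp = Rabs be * sg) by (field; lra).
    assert (Rabs be * sg / kp * kp < T * kp) by (apply Rmult_lt_compat_r; auto).
    apply Rmult_le_reg_r with sg; auto. replace (kp * (T / sg) * sg) with (T * kp) by (field; lra). lra. }
  specialize (E2 Hb).
  assert (Q1 : Q (T * (1 - rr) / tau sg rho) <= tau sg rho / (1 - rr) / T).
  { replace (tau sg rho / (1 - rr) / T) with (/ (T * (1 - rr) / tau sg rho)) by (field; repeat split; lra).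
    apply Q_tail. apply Rdiv_lt_0_compat; [apply Rmult_lt_0_compat|]; lra. }
  assert (Q2 : Q (T / sg / ((1 + aa) * r)) <= sg * (1 + aa) * r / T).
  { replace (sg * (1 + aa) * r / T) with (/ (T / sg / ((1 + aa) * r))) by (field; repeat split; lra).
    apply Q_tail. apply Rdiv_lt_0_compat; [apply Rdiv_lt_0_compat|]; nra. }
  unfold C1. fold T.
  replace ((2 * (tau sg rho / (1 - rr)) + 4 * (sg * (1 + aa) * r)) / T) with
    (2 * (tau sg rho / (1 - rr) / T) + 4 * (sg * (1 + aa) * r / T)) by (field; lra).
  fold rr in E1.
  assert (Habs := Rabs_triang (RInt (Fn sg rho p q d T) (- T) T - hS al (T / sg) be) (hS al (T / sg) be - Q (be / r))).
  replace (RInt (Fn sg rho p q d T) (- T) T - hS al (T / sg) be + (hS al (T / sg) be - Q (be / r)))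
    with (RInt (Fn sg rho p q d T) (- T) T - Q (be / r)) in Habs by ring.
  lra.
Qed.

Lemma sq_inj a b : 0 <= a -> 0 <= b -> a * a = b * b -> a = b.
Proof. intros. nra. Qed.

Lemma HP_qpos sg rho p q d : 0 < sg -> -1 < rho < 1 -> 0 < q ->
  bvn_prob sg sg rho (fun x y => p * x + q * y > d) = Q (d / (sg * sqrt (p * p + 2 * rho * p * q + q * q))).
Proof.
  intros Hs Hr Hq. unfold bvn_prob. rewrite (seq_lim_eq _ _ (HP_qpos_cv sg rho p q d Hs Hr Hq)).
  f_equal.
  assert (Ht := tau_pos sg rho Hs Hr).
  set (al := - (p / q + rho) * sg / tau sg rho).
  set (r := sqrt (1 + al * al)).
  assert (Hr0 : 0 < r) by (apply sqrt_lt_R0; nra).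
  assert (Hr2 : r * r = 1 + al * al) by (apply sqrt_sqrt; nra).
  set (P := p * p + 2 * rho * p * q + q * q).
  assert (HP : 0 <= P).
  { unfold P. replace (p * p + 2 * rho * p * q + q * q) with ((p + rho * q) * (p + rho * q) + (1 - rho * rho) * (q * q)) by ring.
    apply Rplus_le_le_0_compat; [apply Rle_0_sqr| apply Rmult_le_pos; nra]. }
  assert (HsP : sqrt P * sqrt P = P) by (apply sqrt_sqrt; auto).
  assert (HsP0 : 0 <= sqrt P) by apply sqrt_pos.
  assert (Htau2 : tau sg rho * tau sg rho = sg * sg * (1 - rho * rho)).
  { unfold tau. replace (sg * sqrt (1 - rho * rho) * (sg * sqrt (1 - rho * rho))) with (sg * sg * (sqrt (1 - rho * rho) * sqrt (1 - rho * rho))) by ring.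
    rewrite sqrt_sqrt; nra. }
  assert (E : q * tau sg rho * r = sg * sqrt P).
  { apply sq_inj.
    - apply Rmult_le_pos; [apply Rmult_le_pos|]; lra.
    - apply Rmult_le_pos; lra.
    - replace (q * tau sg rho * r * (q * tau sg rho * r)) with (q * q * (tau sg rho * tau sg rho) * (r * r)) by ring.
      replace (sg * sqrt P * (sg * sqrt P)) with (sg * sg * (sqrt P * sqrt P)) by ring.
      rewrite Hr2, HsP. unfold al. unfold P.
      replace (1 + - (p / q + rho) * sg / tau sg rho * (- (p / q + rho) * sg / tau sg rho))
        with (1 + (p / q + rho) * (p / q + rho) * (sg * sg) / (tau sg rho * tau sg rho)) by (field; lra).
      rewrite Htau2. field. repeat split; try lra; nra. }
  unfold Rdiv. rewrite Rmult_assoc, <- Rinv_mult. rewrite E. reflexivity.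
Qed.

Definition W0 (sg rho T x : R) : R :=
  phis sg x * (Phi0 ((T - rho * x) / tau sg rho) - Phi0 ((- T - rho * x) / tau sg rho)).

Lemma W0_cpt sg rho T x : continuity_pt (W0 sg rho T) x.
Proof.
  unfold W0. apply continuity_pt_mult; [apply phis_cpt|]. unfold Rdiv.
  apply continuity_pt_minus.
  - apply (continuity_pt_comp (fun x => (T - rho * x) * / tau sg rho) Phi0); [|apply Phi0_cpt].
    apply continuity_pt_mult; [|apply cst_cpt]. apply continuity_pt_minus; [apply cst_cpt|].
    apply continuity_pt_mult; [apply cst_cpt| apply continuity_pt_id].
  - apply (continuity_pt_comp (fun x => (- T - rho * x) * / tau sg rho) Phi0); [|apply Phi0_cpt].
    apply continuity_pt_mult; [|apply cst_cpt]. apply continuity_pt_minus; [apply cst_cpt|].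
    apply continuity_pt_mult; [apply cst_cpt| apply continuity_pt_id].
Qed.

Lemma inner_q0 sg rho p d T x : 0 < sg -> -1 < rho < 1 -> 0 < p ->
  Defs.RInt (fun y => bvn_density sg sg rho x y * ind (p * x + 0 * y > d)) (- T) T =
  W0 sg rho T x * ind (x > d / p).
Proof.
  intros Hs Hr Hp. assert (Ht := tau_pos sg rho Hs Hr).
  assert (Ei : forall y, ind (p * x + 0 * y > d) = ind (x > d / p)).
  { intros y. apply ind_iff. split; intros H.
    - apply Rmult_lt_reg_r with p; auto. unfold Rdiv. rewrite Rmult_assoc, Rinv_l; lra.
    - apply Rmult_lt_compat_r with (r := p) in H; auto. unfold Rdiv in H. rewrite Rmult_assoc, Rinv_l in H; lra. }
  set (k := ind (x > d / p)).
  assert (Eg : (fun y => bvn_density sg sg rho x y * ind (p * x + 0 * y > d)) =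
               (fun y => (k * phis sg x) * (phi ((y - rho * x) / tau sg rho) / tau sg rho))).
  { apply functional_extensionality; intro y. rewrite Ei, dens_factor; auto. fold k. unfold phis. ring. }
  rewrite Eg. rewrite DRInt_eq.
  - rewrite RInt_scalR by (apply exRInt_cont; intros; apply cpt_to_cont, psi_cpt).
    rewrite RInt_phi_lin by auto. unfold W0. fold k. ring.
  - apply ex_RInt_scalR. apply exRInt_cont; intros; apply cpt_to_cont, psi_cpt.
Qed.

Lemma HP_q0_cv sg rho p d : 0 < sg -> -1 < rho < 1 -> 0 < p ->
  Un_cv (fun n : nat => Defs.RInt (fun x => Defs.RInt (fun y => bvn_density sg sg rho x y * ind (p * x + 0 * y > d))
                                       (- INR n) (INR n)) (- INR n) (INR n))
        (Q (d / p / sg)).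
Proof.
  intros Hs Hr Hp.
  assert (Ht := tau_pos sg rho Hs Hr).
  set (c := d / p).
  set (rr := Rabs rho). assert (Hrr : rr < 1) by (unfold rr; apply Rabs_def1; lra).
  assert (Hrr0 : 0 <= rr) by apply Rabs_pos.
  set (C1 := 2 * (tau sg rho / (1 - rr)) + sg).
  destruct (archimed (Rabs c)) as [Ha _].
  apply (conv_bound _ _ C1 (S (Z.to_nat (up (Rabs c))))).
  intros n Hn. set (T := INR n).
  assert (HT : Rabs c < T).
  { unfold T. apply le_INR in Hn. rewrite S_INR in Hn.
    destruct (Z_le_gt_dec 0 (up (Rabs c))) as [Hz|Hz].
    - rewrite INR_IZR_INZ, Z2Nat.id in Hn; auto. lra.
    - assert (Rabs c >= 0) by (apply Rle_ge; apply Rabs_pos).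
      apply Z.gt_lt in Hz. apply IZR_lt in Hz. lra. }
  assert (HTpos : 0 < T) by (generalize (Rabs_pos c); lra).
  assert (Hc := abs_betw c T ltac:(lra)).
  assert (Einner : (fun x => Defs.RInt (fun y => bvn_density sg sg rho x y * ind (p * x + 0 * y > d)) (- T) T)
                   = (fun x => W0 sg rho T x * ind (x > c))).
  { apply functional_extensionality; intro x. rewrite inner_q0; auto. }
  rewrite Einner.
  destruct (cut_gt (W0 sg rho T) (- T) T c ltac:(lra)) as [Hex Hv].
  { intros; apply cpt_to_cont, W0_cpt. }
  rewrite DRInt_eq by auto. rewrite Hv. rewrite clamp_in by lra.
  set (Q0 := Q (T * (1 - rr) / tau sg rho)).
  assert (HQ0 : 0 <= Q0) by apply Q_nonneg.
  assert (exW : ex_RInt (W0 sg rho T) c T) by (apply exRInt_cont; intros; apply cpt_to_cont, W0_cpt).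
  assert (exP : ex_RInt (phis sg) c T) by (apply exRInt_cont; intros; apply cpt_to_cont, phis_cpt).
  assert (Vp : RInt (phis sg) c T = Q (c / sg) - Q (T / sg)).
  { unfold phis. rewrite (RInt_extR _ (fun y => phi ((y - 0) / sg) / sg)).
    - rewrite RInt_phi_lin by auto. rewrite !Phi0_Q. replace (T - 0) with T by ring. replace (c - 0) with c by ring. Rfix. ring.
    - intros. replace (x - 0) with x by ring. auto. }
  assert (Hpt : forall x, c < x < T -> Rabs (W0 sg rho T x - phis sg x) <= 2 * Q0 * phis sg x).
  { intros x Hx. unfold W0.
    assert (Hp0 := phis_pos sg x Hs).
    replace (phis sg x * (Phi0 ((T - rho * x) / tau sg rho) - Phi0 ((- T - rho * x) / tau sg rho)) - phis sg x)
      with (- (phis sg x * (Q ((T - rho * x) / tau sg rho) + Q ((T + rho * x) / tau sg rho)))).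
    2: { replace ((- T - rho * x) / tau sg rho) with (- ((T + rho * x) / tau sg rho)) by (field; lra).
         rewrite Phi0_odd, !Phi0_Q. field. }
    rewrite Rabs_Ropp, Rabs_mult, (Rabs_pos_eq (phis sg x)) by lra.
    assert (Hrx : Rabs (rho * x) <= rr * T).
    { rewrite Rabs_mult. apply Rmult_le_compat_l; [apply Rabs_pos|]. apply Rabs_le; lra. }
    apply abs_betw in Hrx.
    assert (Hdiv : forall u v, u <= v -> u / tau sg rho <= v / tau sg rho).
    { intros. unfold Rdiv. apply Rmult_le_compat_r; [left; apply Rinv_0_lt_compat|]; lra. }
    assert (Q ((T - rho * x) / tau sg rho) <= Q0) by (apply Q_decr, Hdiv; lra).
    assert (Q ((T + rho * x) / tau sg rho) <= Q0) by (apply Q_decr, Hdiv; lra).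
    generalize (Q_nonneg ((T - rho * x) / tau sg rho)) (Q_nonneg ((T + rho * x) / tau sg rho)); intros.
    rewrite Rabs_pos_eq by lra. nra. }
  assert (exB : ex_RInt (fun x => 2 * Q0 * phis sg x) c T) by (apply ex_RInt_scalR; auto).
  assert (EB : RInt (fun x => 2 * Q0 * phis sg x) c T = 2 * Q0 * RInt (phis sg) c T) by (apply RInt_scalR; auto).
  assert (Vp1 : 0 <= RInt (phis sg) c T <= 1).
  { rewrite Vp. generalize (Q_nonneg (T / sg)) (Q_le1 (c / sg)). assert (Q (T / sg) <= Q (c / sg)).
    { apply Q_decr. unfold Rdiv. apply Rmult_le_compat_r; [left; apply Rinv_0_lt_compat|]; lra. } lra. }
  assert (Err : Rabs (RInt (W0 sg rho T) c T - RInt (phis sg) c T) <= 2 * Q0).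
  { rewrite <- RInt_minusR by auto. apply Rabs_le. split.
    - apply Rle_trans with (RInt (fun x => -1 * (2 * Q0 * phis sg x)) c T).
      + rewrite RInt_scalR, EB by auto. nra.
      + apply RInt_le; [lra| apply ex_RInt_scalR; auto| apply ex_RInt_minusR; auto|].
        intros x Hx. generalize (abs_betw _ _ (Hpt x Hx)). lra.
    - apply Rle_trans with (RInt (fun x => 2 * Q0 * phis sg x) c T).
      + apply RInt_le; [lra| apply ex_RInt_minusR; auto| auto|].
        intros x Hx. generalize (abs_betw _ _ (Hpt x Hx)). lra.
      + rewrite EB. nra. }
  assert (Q1 : Q0 <= tau sg rho / (1 - rr) / T).
  { unfold Q0. replace (tau sg rho / (1 - rr) / T) with (/ (T * (1 - rr) / tau sg rho)) by (field; repeat split; lra).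
    apply Q_tail. apply Rdiv_lt_0_compat; [apply Rmult_lt_0_compat|]; lra. }
  assert (Q2 : Q (T / sg) <= sg / T).
  { replace (sg / T) with (/ (T / sg)) by (field; lra). apply Q_tail. apply Rdiv_lt_0_compat; lra. }
  
  unfold C1. fold T.
  replace ((2 * (tau sg rho / (1 - rr)) + sg) / T) with (2 * (tau sg rho / (1 - rr) / T) + sg / T) by (field; lra).
  rewrite Vp in Err. generalize (Q_nonneg (T / sg)); intro.
  apply Rabs_le. apply abs_betw in Err. lra.
Qed.

Lemma HP_q0 sg rho p d : 0 < sg -> -1 < rho < 1 -> 0 < p ->
  bvn_prob sg sg rho (fun x y => p * x + 0 * y > d) = Q (d / (sg * sqrt (p * p + 2 * rho * p * 0 + 0 * 0))).
Proof.
  intros Hs Hr Hp. unfold bvn_prob. rewrite (seq_lim_eq _ _ (HP_q0_cv sg rho p d Hs Hr Hp)).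
  f_equal. replace (p * p + 2 * rho * p * 0 + 0 * 0) with (p * p) by ring.
  rewrite sqrt_square by lra. field. split; lra.
Qed.

Lemma HP sg rho p q d : 0 < sg -> -1 < rho < 1 -> (p <> 0 \/ q <> 0) ->
  bvn_prob sg sg rho (fun x y => p * x + q * y > d) = Q (d / (sg * sqrt (p * p + 2 * rho * p * q + q * q))).
Proof.
  intros Hs Hr Hpq.
  destruct (Rtotal_order q 0) as [Hq|[Hq|Hq]].
  - rewrite bvn_prob_yflip.
    rewrite (bvn_prob_ext _ _ _ _ (fun x y => p * x + (- q) * y > d)) by (intros; split; intros; lra).
    rewrite HP_qpos by lra. f_equal. f_equal. f_equal. f_equal. ring.
  - subst q. destruct Hpq as [Hp|Hp]; [|lra].
    destruct (Rtotal_order p 0) as [Hp'|[Hp'|Hp']]; [| lra |].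
    + rewrite bvn_prob_xflip.
      rewrite (bvn_prob_ext _ _ _ _ (fun x y => (- p) * x + 0 * y > d)) by (intros; split; intros; lra).
      rewrite HP_q0 by lra. f_equal. f_equal. f_equal. f_equal. ring.
    + apply HP_q0; auto.
  - apply HP_qpos; auto.
Qed.

Lemma C1_iff a b x y : Defs.C1 a b x y <->
  2 * (fst a - fst b) * x + 2 * (snd a - snd b) * y > fst a * fst a + snd a * snd a - fst b * fst b - snd b * snd b.
Proof. unfold Defs.C1. simpl. split; intros; nra. Qed.

Lemma C2_iff a b x y : Defs.C2 a b x y <->
  2 * (fst b - fst a) * x + 2 * (snd b - snd a) * y > fst b * fst b + snd b * snd b - fst a * fst a - snd a * snd a.
Proof. unfold Defs.C2. simpl. split; intros; nra. Qed.

Lemma K_formula sg rho a b : 0 < sg -> -1 < rho < 1 -> a <> b ->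
  let w1 := fst b - fst a in let w2 := snd b - snd a in
  Defs.K sg sg rho a b = (fst a + snd a) + ((fst b + snd b) - (fst a + snd a)) *
    Q ((fst b * fst b + snd b * snd b - fst a * fst a - snd a * snd a) /
       (sg * (2 * sqrt (w1 * w1 + 2 * rho * w1 * w2 + w2 * w2)))).
Proof.
  intros Hs Hr Hab w1 w2.
  assert (Hw : 2 * w1 <> 0 \/ 2 * w2 <> 0).
  { destruct (Req_dec w1 0) as [H1|H1]; [|left; lra]. destruct (Req_dec w2 0) as [H2|H2]; [|right; lra].
    exfalso. apply Hab. destruct a, b. unfold w1, w2 in *. simpl in *. f_equal; lra. }
  assert (Hp1 : 2 * (fst a - fst b) <> 0 \/ 2 * (snd a - snd b) <> 0) by (unfold w1, w2 in Hw; destruct Hw; [left|right]; lra).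
  assert (Hp2 : 2 * (fst b - fst a) <> 0 \/ 2 * (snd b - snd a) <> 0) by (unfold w1, w2 in Hw; destruct Hw; [left|right]; lra).
  unfold Defs.K. destruct excluded_middle_informative as [E|_]; [contradiction|].
  rewrite (bvn_prob_ext _ _ _ _ _ (C1_iff a b)).
  rewrite (bvn_prob_ext _ _ _ _ _ (C2_iff a b)).
  rewrite !HP by auto.
  set (S := w1 * w1 + 2 * rho * w1 * w2 + w2 * w2).
  assert (E1 : 2 * (fst a - fst b) * (2 * (fst a - fst b)) + 2 * rho * (2 * (fst a - fst b)) * (2 * (snd a - snd b)) +
               2 * (snd a - snd b) * (2 * (snd a - snd b)) = 4 * S) by (unfold S, w1, w2; ring).
  assert (E2 : 2 * (fst b - fst a) * (2 * (fst b - fst a)) + 2 * rho * (2 * (fst b - fst a)) * (2 * (snd b - snd a)) +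
               2 * (snd b - snd a) * (2 * (snd b - snd a)) = 4 * S) by (unfold S, w1, w2; ring).
  rewrite E1, E2.
  assert (HS : 0 <= S).
  { unfold S. replace (w1 * w1 + 2 * rho * w1 * w2 + w2 * w2) with ((w1 + rho * w2) * (w1 + rho * w2) + (1 - rho * rho) * (w2 * w2)) by ring.
    apply Rplus_le_le_0_compat; [apply Rle_0_sqr| apply Rmult_le_pos; nra]. }
  assert (E4 : sqrt (4 * S) = 2 * sqrt S).
  { rewrite sqrt_mult by lra. replace 4 with (2 * 2) by ring. rewrite sqrt_square by lra. auto. }
  rewrite E4.
  set (z := (fst b * fst b + snd b * snd b - fst a * fst a - snd a * snd a) / (sg * (2 * sqrt S))).
  replace ((fst a * fst a + snd a * snd a - fst b * fst b - snd b * snd b) / (sg * (2 * sqrt S))) with (- z)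
    by (unfold z, Rdiv; ring).
  rewrite Q_neg. ring.
Qed.

Lemma x2star_pos sg rho : 0 < sg -> 0 < rho < 1 -> 0 < x2star sg sg rho.
Proof.
  intros. rewrite c_eq by auto. assert (H1 := kk_gt1).
  assert (0 < sqrt ((1 + rho) / 2)) by (apply sqrt_lt_R0; lra).
  apply Rmult_lt_0_compat; [lra| apply Rmult_lt_0_compat; lra].
Qed.

Theorem mainTheorem8 (sx sy rho : R) (hsx : 0 < sx) (hsy : 0 < sy)
  (hrho : -1 < rho < 1) (heq : sx = sy) (hrho' : 0 < rho < 1) :
  forall a b : R * R,
    K sx sy rho (astar sx sy rho) b <= K sx sy rho (astar sx sy rho) (bstar sx sy rho) /\
    K sx sy rho (astar sx sy rho) (bstar sx sy rho) = 0 /\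
    0 <= K sx sy rho a (bstar sx sy rho).
Proof.
  intros a b. subst sy. set (sg := sx) in *.
  set (c := x2star sg sg rho).
  assert (Hc : 0 < c) by (apply x2star_pos; auto).
  assert (Hab : astar sg sg rho <> bstar sg sg rho).
  { unfold astar, bstar. fold c. intros H. injection H. lra. }
  assert (K0 : Defs.K sg sg rho (astar sg sg rho) (bstar sg sg rho) = 0).
  { rewrite K_formula by auto. unfold astar, bstar. fold c. simpl.
    replace (c * c + c * c - - c * - c - - c * - c) with 0 by ring.
    unfold Rdiv. rewrite Rmult_0_l, Q0. field. }
  split; [|split; auto]; rewrite ?K0.
  - destruct (excluded_middle_informative (astar sg sg rho = b)) as [E|E].
    + unfold Defs.K. destruct excluded_middle_informative; [|contradiction].
      unfold astar. fold c. simpl. lra.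
    + rewrite K_formula by auto. unfold astar. fold c. simpl.
      set (w1 := fst b - - c). set (w2 := snd b - - c).
      assert (Hw : w1 <> 0 \/ w2 <> 0).
      { destruct (Req_dec w1 0); [|left; auto]. destruct (Req_dec w2 0); [|right; auto].
        exfalso. apply E. destruct b. unfold astar, w1, w2 in *. simpl in *. fold c. f_equal; lra. }
      assert (HK := keyL sg rho w1 w2 hsx hrho' Hw). fold c in HK.
      set (S := w1 * w1 + 2 * rho * w1 * w2 + w2 * w2) in *.
      assert (HS : 0 < S).
      { unfold S. replace (w1 * w1 + 2 * rho * w1 * w2 + w2 * w2) with ((w1 + rho * w2) * (w1 + rho * w2) + (1 - rho * rho) * (w2 * w2)) by ring.
        destruct (Req_dec w2 0) as [H2|H2].
        - rewrite H2. destruct Hw as [H1|H1]; [|contradiction]. replace (w1 + rho * 0) with w1 by ring.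
          assert (H3 := Rsqr_pos_lt w1 H1). unfold Rsqr in H3. replace ((1 - rho * rho) * (0 * 0)) with 0 by ring. lra.
        - assert (H3 := Rsqr_pos_lt w2 H2). unfold Rsqr in H3.
          assert (0 < (1 - rho * rho) * (w2 * w2)) by (apply Rmult_lt_0_compat; nra).
          assert (H4 := Rle_0_sqr (w1 + rho * w2)). unfold Rsqr in H4. lra. }
      assert (HsS : 0 < sqrt S) by (apply sqrt_lt_R0; auto).
      replace ((fst b * fst b + snd b * snd b - - c * - c - - c * - c) / (sg * (2 * sqrt S)))
        with (((w1 * w1 + w2 * w2) / 2 - c * (w1 + w2)) / (sg * sqrt S)) by (unfold w1, w2; field; lra).
      replace (fst b + snd b - (- c + - c)) with (w1 + w2) by (unfold w1, w2; ring). lra.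
  - destruct (excluded_middle_informative (a = bstar sg sg rho)) as [E|E].
    + unfold Defs.K. destruct excluded_middle_informative; [|contradiction].
      rewrite E. unfold bstar. fold c. simpl. lra.
    + rewrite K_formula by auto. unfold bstar. fold c. simpl.
      set (w1 := c - fst a). set (w2 := c - snd a).
      assert (Hw : w1 <> 0 \/ w2 <> 0).
      { destruct (Req_dec w1 0); [|left; auto]. destruct (Req_dec w2 0); [|right; auto].
        exfalso. apply E. destruct a. unfold bstar, w1, w2 in *. simpl in *. fold c. f_equal; lra. }
      assert (HK := keyL sg rho w1 w2 hsx hrho' Hw). fold c in HK.
      set (S := w1 * w1 + 2 * rho * w1 * w2 + w2 * w2) in *.
      assert (HS : 0 < S).
      { unfold S. replace (w1 * w1 + 2 * rho * w1 * w2 + w2 * w2) with ((w1 + rho * w2) * (w1 + rho * w2) + (1 - rho * rho) * (w2 * w2)) by ring.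
        destruct (Req_dec w2 0) as [H2|H2].
        - rewrite H2. destruct Hw as [H1|H1]; [|contradiction]. replace (w1 + rho * 0) with w1 by ring.
          assert (H3 := Rsqr_pos_lt w1 H1). unfold Rsqr in H3. replace ((1 - rho * rho) * (0 * 0)) with 0 by ring. lra.
        - assert (H3 := Rsqr_pos_lt w2 H2). unfold Rsqr in H3.
          assert (0 < (1 - rho * rho) * (w2 * w2)) by (apply Rmult_lt_0_compat; nra).
          assert (H4 := Rle_0_sqr (w1 + rho * w2)). unfold Rsqr in H4. lra. }
      assert (HsS : 0 < sqrt S) by (apply sqrt_lt_R0; auto).
      replace ((c * c + c * c - fst a * fst a - snd a * snd a) / (sg * (2 * sqrt S)))
        with (- (((w1 * w1 + w2 * w2) / 2 - c * (w1 + w2)) / (sg * sqrt S))) by (unfold w1, w2; field; lra).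
      rewrite Q_neg.
      replace (c + c - (fst a + snd a)) with (w1 + w2) by (unfold w1, w2; ring).
      replace (fst a + snd a) with (2 * c - (w1 + w2)) by (unfold w1, w2; ring). lra.
Qed.
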